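(* Let $I\subset\mathbb R$ be a compact interval containing $0$ in its interior and consider the planar slow-fast system $$\dot x=\epsilon f(x,y,\epsilon),\qquad \dot y=y\,h(x,y,\epsilon),$$ with $f,h$ $C^\infty$-smooth, $\epsilon\ge 0$ small. Assume $x\,h(x,0,0)<0$ for all $x\in I\setminus\{0\}$ and $\frac{\partial h}{\partial x}(0,0,0)<0$. Then there exists a smooth $\epsilon$-family of coordinate changes which, in a neighbourhood of $I\times\{0\}\subset\mathbb R^2$ and up to multiplication of the vector field by a smooth positive function, brings the system into the form $$\dot x=\epsilon f_0(x,\epsilon)+y\,g_0(x,y,\epsilon),\qquad \dot y=-xy,$$ for some smooth functions $f_0,g_0$ with $g_0(0,0,0)=0$.
   Context: All functions are $C^\infty$. ''Smooth $\epsilon$-family of coordinate changes'' means a diffeomorphism in $(x,y)$ depending smoothly on the parameter $\epsilon$ for $\epsilon\ge0$ small. *)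

(* Defs.v *)
From Stdlib Require Import Reals.
From Coquelicot Require Import Coquelicot.
Open Scope R_scope.

(* Functions of (x, y, eps), curried. *)
Definition fun3 := R -> R -> R -> R.

Definition D1 (f : fun3) : fun3 := fun x y e => Derive (fun t => f t y e) x.
Definition D2 (f : fun3) : fun3 := fun x y e => Derive (fun t => f x t e) y.
Definition D3 (f : fun3) : fun3 := fun x y e => Derive (fun t => f x y t) e.

Definition continuous3 (f : fun3) : Prop :=
  forall x y e,
    continuous (fun p : R * R * R => f (fst (fst p)) (snd (fst p)) (snd p)) (x, y, e).

Definition has_partials3 (f : fun3) : Prop :=
  forall x y e,
    ex_derive (fun t => f t y e) x /\
    ex_derive (fun t => f x t e) y /\
    ex_derive (fun t => f x y t) e.

Fixpoint Cn3 (n : nat) (f : fun3) : Prop :=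
  match n with
  | O => continuous3 f
  | S m => continuous3 f /\ has_partials3 f /\
           Cn3 m (D1 f) /\ Cn3 m (D2 f) /\ Cn3 m (D3 f)
  end.

Definition smooth3 (f : fun3) : Prop := forall n, Cn3 n f.

Definition open2 (U : R -> R -> Prop) : Prop :=
  forall x y, U x y -> exists d, 0 < d /\
    forall x' y', Rabs (x' - x) < d -> Rabs (y' - y) < d -> U x' y'.

(* Main.v *)
Require Import Defs.
From Stdlib Require Import Reals.
From Coquelicot Require Import Coquelicot.
From Stdlib Require Import Lra Psatz FunctionalExtensionality Classical ClassicalEpsilon List.
Open Scope R_scope.

Definition cont3 (f : fun3) : Prop :=
  forall x y e eps, 0 < eps -> exists d, 0 < d /\ forall x' y' e',
    Rabs (x' - x) < d -> Rabs (y' - y) < d -> Rabs (e' - e) < d ->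
    Rabs (f x' y' e' - f x y e) < eps.

Lemma cont3_iff f : continuous3 f <-> cont3 f.
Proof.
split.
- intros H x y e eps Heps.
  specialize (H x y e). unfold continuous in H.
  apply filterlim_locally with (eps := mkposreal eps Heps) in H.
  destruct H as [d Hd]. exists d. split; [apply cond_pos|].
  intros x' y' e' H1 H2 H3. apply (Hd (x',y',e')).
  repeat split; assumption.
- intros H x y e. unfold continuous. apply filterlim_locally. intros eps.
  destruct (H x y e eps (cond_pos eps)) as [d [Hd H']].
  exists (mkposreal d Hd). intros [[x' y'] e'] [[H1 H2] H3].
  apply H'; assumption.
Qed.

Lemma Derive_eq f x l : is_derive f x l -> Derive f x = l.
Proof. intro H. now apply is_derive_unique. Qed.

Lemma Cn3_cont n f : Cn3 n f -> continuous3 f.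
Proof. destruct n; simpl; tauto. Qed.

Lemma Cn3_down n f : Cn3 (S n) f -> Cn3 n f.
Proof.
revert f; induction n; intros f H.
- simpl in H; tauto.
- destruct H as [Hc [Hp [H1 [H2 H3]]]].
  split; [exact Hc|split;[exact Hp|]]. repeat split; apply IHn; assumption.
Qed.

Lemma Cn3_le m n f : (m <= n)%nat -> Cn3 n f -> Cn3 m f.
Proof. induction 1; auto. intro H0. apply IHle. now apply Cn3_down. Qed.

Lemma smooth3_D1 f : smooth3 f -> smooth3 (D1 f).
Proof. intros H n. destruct (H (S n)) as [_ [_ [? _]]]. auto. Qed.
Lemma smooth3_D2 f : smooth3 f -> smooth3 (D2 f).
Proof. intros H n. destruct (H (S n)) as [_ [_ [_ [? _]]]]. auto. Qed.
Lemma smooth3_D3 f : smooth3 f -> smooth3 (D3 f).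
Proof. intros H n. destruct (H (S n)) as [_ [_ [_ [_ ?]]]]. auto. Qed.
Lemma smooth3_partials f : smooth3 f -> has_partials3 f.
Proof. intros H. destruct (H 1%nat) as [_ [? _]]. auto. Qed.
Lemma smooth3_cont f : smooth3 f -> continuous3 f.
Proof. intros H. exact (Cn3_cont 0 f (H 0%nat)). Qed.
Lemma Cn3_partials n f : Cn3 (S n) f -> has_partials3 f.
Proof. intros [_ [? _]]. auto. Qed.

Lemma cont3_const c : cont3 (fun _ _ _ => c).
Proof. intros x y e eps He. exists 1. split; [lra|]. intros. rewrite Rminus_eq_0, Rabs_R0. lra. Qed.
Lemma cont3_p1 : cont3 (fun x _ _ => x).
Proof. intros x y e eps He. exists eps. split; [lra|]. intros. auto. Qed.
Lemma cont3_p2 : cont3 (fun _ y _ => y).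
Proof. intros x y e eps He. exists eps. split; [lra|]. intros. auto. Qed.
Lemma cont3_p3 : cont3 (fun _ _ e => e).
Proof. intros x y e eps He. exists eps. split; [lra|]. intros. auto. Qed.

Lemma cont3_comp G u v w : cont3 G -> cont3 u -> cont3 v -> cont3 w ->
  cont3 (fun x y e => G (u x y e) (v x y e) (w x y e)).
Proof.
intros HG Hu Hv Hw x y e eps He.
destruct (HG (u x y e) (v x y e) (w x y e) eps He) as [d [Hd HG']].
destruct (Hu x y e d Hd) as [d1 [Hd1 Hu']].
destruct (Hv x y e d Hd) as [d2 [Hd2 Hv']].
destruct (Hw x y e d Hd) as [d3 [Hd3 Hw']].
exists (Rmin d1 (Rmin d2 d3)). split.
{ repeat apply Rmin_pos; auto. }
intros x' y' e' H1 H2 H3.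
assert (A1: Rabs (x'-x) < d1) by (eapply Rlt_le_trans; [exact H1| apply Rmin_l]).
assert (A2: Rabs (y'-y) < d1) by (eapply Rlt_le_trans; [exact H2| apply Rmin_l]).
assert (A3: Rabs (e'-e) < d1) by (eapply Rlt_le_trans; [exact H3| apply Rmin_l]).
assert (B1: Rabs (x'-x) < d2) by (eapply Rlt_le_trans; [exact H1| eapply Rle_trans;[apply Rmin_r|apply Rmin_l]]).
assert (B2: Rabs (y'-y) < d2) by (eapply Rlt_le_trans; [exact H2| eapply Rle_trans;[apply Rmin_r|apply Rmin_l]]).
assert (B3: Rabs (e'-e) < d2) by (eapply Rlt_le_trans; [exact H3| eapply Rle_trans;[apply Rmin_r|apply Rmin_l]]).
assert (C1: Rabs (x'-x) < d3) by (eapply Rlt_le_trans; [exact H1| eapply Rle_trans;[apply Rmin_r|apply Rmin_r]]).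
assert (C2: Rabs (y'-y) < d3) by (eapply Rlt_le_trans; [exact H2| eapply Rle_trans;[apply Rmin_r|apply Rmin_r]]).
assert (C3: Rabs (e'-e) < d3) by (eapply Rlt_le_trans; [exact H3| eapply Rle_trans;[apply Rmin_r|apply Rmin_r]]).
apply HG'; auto.
Qed.

Lemma cont3_plus f g : cont3 f -> cont3 g -> cont3 (fun x y e => f x y e + g x y e).
Proof.
intros Hf Hg x y e eps He.
destruct (Hf x y e (eps/2)) as [d1 [Hd1 H1]]; [lra|].
destruct (Hg x y e (eps/2)) as [d2 [Hd2 H2]]; [lra|].
exists (Rmin d1 d2). split; [now apply Rmin_pos|].
intros x' y' e' A B C.
pose proof (Rmin_l d1 d2). pose proof (Rmin_r d1 d2).
specialize (H1 x' y' e' ltac:(lra) ltac:(lra) ltac:(lra)).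
specialize (H2 x' y' e' ltac:(lra) ltac:(lra) ltac:(lra)).
replace (f x' y' e' + g x' y' e' - (f x y e + g x y e)) with
  ((f x' y' e' - f x y e) + (g x' y' e' - g x y e)) by ring.
eapply Rle_lt_trans; [apply Rabs_triang|]. lra.
Qed.

Lemma cont3_mult f g : cont3 f -> cont3 g -> cont3 (fun x y e => f x y e * g x y e).
Proof.
intros Hf Hg x y e eps He.
set (A := Rabs (f x y e) + 1). set (B := Rabs (g x y e) + 1).
assert (HA: 0 < A) by (unfold A; pose proof (Rabs_pos (f x y e)); lra).
assert (HB: 0 < B) by (unfold B; pose proof (Rabs_pos (g x y e)); lra).
set (eta := Rmin 1 (eps / (2*(A+B)))).
assert (Heta: 0 < eta).
{ apply Rmin_pos; [lra|]. apply Rdiv_lt_0_compat; lra. }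
destruct (Hf x y e eta Heta) as [d1 [Hd1 H1]].
destruct (Hg x y e eta Heta) as [d2 [Hd2 H2]].
exists (Rmin d1 d2). split; [now apply Rmin_pos|].
intros x' y' e' Ha Hb Hc.
pose proof (Rmin_l d1 d2). pose proof (Rmin_r d1 d2).
specialize (H1 x' y' e' ltac:(lra) ltac:(lra) ltac:(lra)).
specialize (H2 x' y' e' ltac:(lra) ltac:(lra) ltac:(lra)).
set (a := f x y e) in *. set (b := g x y e) in *.
set (a' := f x' y' e') in *. set (b' := g x' y' e') in *.
replace (a' * b' - a * b) with ((a' - a) * b' + a * (b' - b)) by ring.
assert (Heta1 : eta <= 1) by apply Rmin_l.
assert (Heta2 : eta <= eps / (2*(A+B))) by apply Rmin_r.
assert (Hb' : Rabs b' <= B).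
{ unfold B. replace b' with (b + (b' - b)) by ring.
  eapply Rle_trans; [apply Rabs_triang|]. lra. }
eapply Rle_lt_trans; [apply Rabs_triang|]. rewrite !Rabs_mult.
assert (Rabs (a'-a) * Rabs b' <= eta * B).
{ apply Rmult_le_compat; try apply Rabs_pos; lra. }
assert (Rabs a * Rabs (b'-b) <= A * eta).
{ apply Rmult_le_compat; try apply Rabs_pos; unfold A; lra. }
assert (eta * (A + B) <= eps/2).
{ apply Rle_trans with (eps / (2*(A+B)) * (A+B)).
  apply Rmult_le_compat_r; lra. right. field. lra. }
nra.
Qed.

Ltac split3 := refine (conj _ (conj _ _)).
Ltac ptac := match goal with
 | P : has_partials3 ?f |- ex_derive (fun t => ?f t ?y ?e) ?x => exact (proj1 (P x y e))
 | P : has_partials3 ?f |- ex_derive (fun t => ?f ?x t ?e) ?y => exact (proj1 (proj2 (P x y e)))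
 | P : has_partials3 ?f |- ex_derive (fun t => ?f ?x ?y t) ?e => exact (proj2 (proj2 (P x y e)))
 end.
Lemma exd_id (x : R) : ex_derive (fun t : R => t) x.
Proof. exists 1. apply is_derive_Reals, derivable_pt_lim_id. Qed.
Lemma exd_plus (f g : R -> R) x : ex_derive f x -> ex_derive g x -> ex_derive (fun t => f t + g t) x.
Proof. intros H1 H2. exact (ex_derive_plus f g x H1 H2). Qed.
Lemma exd_const (c x : R) : ex_derive (fun _ : R => c) x.
Proof. exists 0. apply is_derive_Reals, derivable_pt_lim_const. Qed.

Lemma Cn3_const n c : Cn3 n (fun _ _ _ => c).
Proof.
revert c; induction n; intro c.
- simpl. apply cont3_iff, cont3_const.
- assert (E1 : forall D, D = D1 \/ D = D2 \/ D = D3 -> D (fun _ _ _ => c) = (fun _ _ _ => 0)).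
  { intros D [->|[->| ->]]; apply functional_extensionality; intro x;
    apply functional_extensionality; intro y; apply functional_extensionality; intro e;
    unfold D1, D2, D3; apply Derive_const. }
  split; [apply cont3_iff, cont3_const|]. split.
  { intros x y e. refine (conj _ (conj _ _)); exact (exd_const _ _). }
  rewrite !E1 by tauto. refine (conj _ (conj _ _)); apply IHn.
Qed.

Lemma Cn3_p1 n : Cn3 n (fun x _ _ => x).
Proof.
destruct n. { apply cont3_iff, cont3_p1. }
split; [apply cont3_iff, cont3_p1|]. split.
{ intros x y e. refine (conj _ (conj _ _)); first [exact (exd_id _)|exact (exd_const _ _)]. }
assert (H1 : D1 (fun x _ _ => x) = fun _ _ _ => 1).
{ repeat (apply functional_extensionality; intro). unfold D1, D2, D3; apply Derive_id. }
assert (H2 : D2 (fun x _ _ => x) = fun _ _ _ => 0).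
{ repeat (apply functional_extensionality; intro). unfold D1, D2, D3; apply Derive_const. }
assert (H3 : D3 (fun x _ _ => x) = fun _ _ _ => 0).
{ repeat (apply functional_extensionality; intro). unfold D1, D2, D3; apply Derive_const. }
rewrite H1, H2, H3. refine (conj _ (conj _ _)); apply Cn3_const.
Qed.

Lemma Cn3_p2 n : Cn3 n (fun _ y _ => y).
Proof.
destruct n. { apply cont3_iff, cont3_p2. }
split; [apply cont3_iff, cont3_p2|]. split.
{ intros x y e. refine (conj _ (conj _ _)); first [exact (exd_id _)|exact (exd_const _ _)]. }
assert (H1 : D1 (fun _ y _ => y) = fun _ _ _ => 0).
{ repeat (apply functional_extensionality; intro). unfold D1, D2, D3; apply Derive_const. }
assert (H2 : D2 (fun _ y _ => y) = fun _ _ _ => 1).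
{ repeat (apply functional_extensionality; intro). unfold D1, D2, D3; apply Derive_id. }
assert (H3 : D3 (fun _ y _ => y) = fun _ _ _ => 0).
{ repeat (apply functional_extensionality; intro). unfold D1, D2, D3; apply Derive_const. }
rewrite H1, H2, H3. refine (conj _ (conj _ _)); apply Cn3_const.
Qed.

Lemma Cn3_p3 n : Cn3 n (fun _ _ e => e).
Proof.
destruct n. { apply cont3_iff, cont3_p3. }
split; [apply cont3_iff, cont3_p3|]. split.
{ intros x y e. refine (conj _ (conj _ _)); first [exact (exd_id _)|exact (exd_const _ _)]. }
assert (H1 : D1 (fun _ _ e => e) = fun _ _ _ => 0).
{ repeat (apply functional_extensionality; intro). unfold D1, D2, D3; apply Derive_const. }
assert (H2 : D2 (fun _ _ e => e) = fun _ _ _ => 0).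
{ repeat (apply functional_extensionality; intro). unfold D1, D2, D3; apply Derive_const. }
assert (H3 : D3 (fun _ _ e => e) = fun _ _ _ => 1).
{ repeat (apply functional_extensionality; intro). unfold D1, D2, D3; apply Derive_id. }
rewrite H1, H2, H3. refine (conj _ (conj _ _)); apply Cn3_const.
Qed.

Lemma Cn3_plus n f g : Cn3 n f -> Cn3 n g -> Cn3 n (fun x y e => f x y e + g x y e).
Proof.
revert f g; induction n; intros f g Hf Hg.
{ apply cont3_iff, cont3_plus; apply cont3_iff; assumption. }
pose proof (Cn3_partials _ _ Hf) as Pf. pose proof (Cn3_partials _ _ Hg) as Pg.
destruct Hf as [Cf [_ [F1 [F2 F3]]]]. destruct Hg as [Cg [_ [G1 [G2 G3]]]].
split. { apply cont3_iff, cont3_plus; apply cont3_iff; assumption. }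
split.
{ intros x y e. destruct (Pf x y e) as [? [? ?]]. destruct (Pg x y e) as [? [? ?]].
  refine (conj _ (conj _ _)); apply exd_plus; assumption. }
assert (E1 : D1 (fun x y e => f x y e + g x y e) = fun x y e => D1 f x y e + D1 g x y e).
{ repeat (apply functional_extensionality; intro). unfold D1; cbv beta. apply Derive_plus; ptac. }
assert (E2 : D2 (fun x y e => f x y e + g x y e) = fun x y e => D2 f x y e + D2 g x y e).
{ repeat (apply functional_extensionality; intro). unfold D2; cbv beta. apply Derive_plus; ptac. }
assert (E3 : D3 (fun x y e => f x y e + g x y e) = fun x y e => D3 f x y e + D3 g x y e).
{ repeat (apply functional_extensionality; intro). unfold D3; cbv beta. apply Derive_plus; ptac. }
rewrite E1, E2, E3. refine (conj _ (conj _ _)); apply IHn; assumption.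
Qed.

Lemma Cn3_mult n f g : Cn3 n f -> Cn3 n g -> Cn3 n (fun x y e => f x y e * g x y e).
Proof.
revert f g; induction n; intros f g Hf Hg.
{ apply cont3_iff, cont3_mult; apply cont3_iff; assumption. }
pose proof (Cn3_partials _ _ Hf) as Pf. pose proof (Cn3_partials _ _ Hg) as Pg.
pose proof (Cn3_down _ _ Hf) as Hf'. pose proof (Cn3_down _ _ Hg) as Hg'.
destruct Hf as [Cf [_ [F1 [F2 F3]]]]. destruct Hg as [Cg [_ [G1 [G2 G3]]]].
split. { apply cont3_iff, cont3_mult; apply cont3_iff; assumption. }
split.
{ intros x y e. destruct (Pf x y e) as [? [? ?]]. destruct (Pg x y e) as [? [? ?]].
  refine (conj _ (conj _ _)); apply ex_derive_mult; assumption. }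
assert (E1 : D1 (fun x y e => f x y e * g x y e) = fun x y e => D1 f x y e * g x y e + f x y e * D1 g x y e).
{ apply functional_extensionality; intro x; apply functional_extensionality; intro y; apply functional_extensionality; intro e. unfold D1; cbv beta. apply (Derive_mult (fun t => f t y e) (fun t => g t y e)); ptac. }
assert (E2 : D2 (fun x y e => f x y e * g x y e) = fun x y e => D2 f x y e * g x y e + f x y e * D2 g x y e).
{ apply functional_extensionality; intro x; apply functional_extensionality; intro y; apply functional_extensionality; intro e. unfold D2; cbv beta. apply (Derive_mult (fun t => f x t e) (fun t => g x t e)); ptac. }
assert (E3 : D3 (fun x y e => f x y e * g x y e) = fun x y e => D3 f x y e * g x y e + f x y e * D3 g x y e).
{ apply functional_extensionality; intro x; apply functional_extensionality; intro y; apply functional_extensionality; intro e. unfold D3; cbv beta. apply (Derive_mult (fun t => f x y t) (fun t => g x y t)); ptac. }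
rewrite E1, E2, E3. refine (conj _ (conj _ _)); apply Cn3_plus; apply IHn; assumption.
Qed.

Lemma smooth3_const c : smooth3 (fun _ _ _ => c).
Proof. intro n; apply Cn3_const. Qed.
Lemma smooth3_p1 : smooth3 (fun x _ _ => x). Proof. intro n; apply Cn3_p1. Qed.
Lemma smooth3_p2 : smooth3 (fun _ y _ => y). Proof. intro n; apply Cn3_p2. Qed.
Lemma smooth3_p3 : smooth3 (fun _ _ e => e). Proof. intro n; apply Cn3_p3. Qed.
Lemma smooth3_plus f g : smooth3 f -> smooth3 g -> smooth3 (fun x y e => f x y e + g x y e).
Proof. intros ? ? n; apply Cn3_plus; auto. Qed.
Lemma smooth3_mult f g : smooth3 f -> smooth3 g -> smooth3 (fun x y e => f x y e * g x y e).
Proof. intros ? ? n; apply Cn3_mult; auto. Qed.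
Lemma smooth3_opp f : smooth3 f -> smooth3 (fun x y e => - f x y e).
Proof. intros H. assert (E: (fun x y e => - f x y e) = (fun x y e => (fun _ _ _ => -1) x y e * f x y e)).
  { repeat (apply functional_extensionality; intro). ring. }
  rewrite E. apply smooth3_mult; auto using smooth3_const. Qed.
Lemma smooth3_minus f g : smooth3 f -> smooth3 g -> smooth3 (fun x y e => f x y e - g x y e).
Proof. intros Hf Hg. apply (smooth3_plus f (fun x y e => - g x y e)). exact Hf. exact (smooth3_opp g Hg). Qed.


Lemma mvt1 (g : R -> R) a a1 : (forall t, ex_derive g t) ->
  exists xi, Rabs (xi - a) <= Rabs (a1 - a) /\ g a1 - g a = Derive g xi * (a1 - a).
Proof.
intros Hg.
destruct (MVT_gen g a a1 (Derive g)) as [c [Hc E]].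
- intros x _. apply Derive_correct, Hg.
- intros x _. apply continuity_pt_filterlim. exact (ex_derive_continuous _ _ (Hg x)).
- exists c. split; [|exact E].
  unfold Rmin, Rmax in Hc. destruct (Rle_dec a a1); unfold Rabs;
  repeat destruct Rcase_abs; lra.
Qed.

Lemma derive_bound (g : R -> R) s l : derivable_pt_lim g s l ->
  exists d, 0 < d /\ forall h, Rabs h < d -> Rabs (g (s+h) - g s) <= (Rabs l + 1) * Rabs h.
Proof.
intros H. destruct (H 1 Rlt_0_1) as [d Hd]. exists d. split; [apply cond_pos|].
intros h Hh. destruct (Req_dec h 0) as [->|Hn].
{ rewrite Rplus_0_r, Rminus_eq_0, Rabs_R0. lra. }
specialize (Hd h Hn Hh).
replace (g (s+h) - g s) with (((g (s+h) - g s)/h) * h) by (field; auto).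
rewrite Rabs_mult. apply Rmult_le_compat_r; [apply Rabs_pos|].
replace ((g (s+h) - g s)/h) with (((g (s+h) - g s)/h - l) + l) by ring.
eapply Rle_trans; [apply Rabs_triang|]. lra.
Qed.

Lemma chain3 (G : fun3) (al be ga : R -> R) s a' b' c' :
  has_partials3 G -> continuous3 (D1 G) -> continuous3 (D2 G) -> continuous3 (D3 G) ->
  is_derive al s a' -> is_derive be s b' -> is_derive ga s c' ->
  is_derive (fun t => G (al t) (be t) (ga t)) s
    (D1 G (al s) (be s) (ga s) * a' + D2 G (al s) (be s) (ga s) * b'
     + D3 G (al s) (be s) (ga s) * c').
Proof.
intros HP C1 C2 C3 Ha Hb Hc.
apply cont3_iff in C1, C2, C3.
apply is_derive_Reals in Ha, Hb, Hc. apply is_derive_Reals.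
set (A := al s). set (B := be s). set (C := ga s).
set (M := Rabs a' + Rabs b' + Rabs c' + 1).
set (N := Rabs (D1 G A B C) + Rabs (D2 G A B C) + Rabs (D3 G A B C) + 1).
assert (HM : 0 < M) by (unfold M; pose proof (Rabs_pos a'); pose proof (Rabs_pos b'); pose proof (Rabs_pos c'); lra).
assert (HN : 0 < N) by (unfold N; pose proof (Rabs_pos (D1 G A B C)); pose proof (Rabs_pos (D2 G A B C)); pose proof (Rabs_pos (D3 G A B C)); lra).
intros eps Heps.
set (e1 := eps / (6 * M)). set (e2 := Rmin 1 (eps / (2 * N))).
assert (He1 : 0 < e1) by (unfold e1; apply Rdiv_lt_0_compat; lra).
assert (He2 : 0 < e2) by (unfold e2; apply Rmin_pos; [lra|apply Rdiv_lt_0_compat; lra]).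
destruct (C1 A B C e1 He1) as [n1 [Hn1 K1]].
destruct (C2 A B C e1 He1) as [n2 [Hn2 K2]].
destruct (C3 A B C e1 He1) as [n3 [Hn3 K3]].
set (eta := Rmin n1 (Rmin n2 n3)).
assert (Heta : 0 < eta) by (unfold eta; repeat apply Rmin_pos; auto).
assert (Eta1 : eta <= n1) by apply Rmin_l.
assert (Eta2 : eta <= n2) by (eapply Rle_trans; [apply Rmin_r|apply Rmin_l]).
assert (Eta3 : eta <= n3) by (eapply Rle_trans; [apply Rmin_r|apply Rmin_r]).
destruct (Ha e2 He2) as [da Da]. destruct (Hb e2 He2) as [db Db]. destruct (Hc e2 He2) as [dc Dc].
assert (HdM : 0 < eta / M) by (apply Rdiv_lt_0_compat; lra).
set (d := Rmin (Rmin da db) (Rmin dc (eta / M))).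
assert (Hd : 0 < d) by (unfold d; repeat apply Rmin_pos; auto; apply cond_pos).
exists (mkposreal d Hd). intros h Hh0 Hh. simpl in Hh.
assert (Hda : Rabs h < da) by (eapply Rlt_le_trans; [exact Hh|]; unfold d; eapply Rle_trans; [apply Rmin_l|apply Rmin_l]).
assert (Hdb : Rabs h < db) by (eapply Rlt_le_trans; [exact Hh|]; unfold d; eapply Rle_trans; [apply Rmin_l|apply Rmin_r]).
assert (Hdc : Rabs h < dc) by (eapply Rlt_le_trans; [exact Hh|]; unfold d; eapply Rle_trans; [apply Rmin_r|apply Rmin_l]).
assert (HdM' : Rabs h < eta / M) by (eapply Rlt_le_trans; [exact Hh|]; unfold d; eapply Rle_trans; [apply Rmin_r|apply Rmin_r]).
specialize (Da h Hh0 Hda). specialize (Db h Hh0 Hdb). specialize (Dc h Hh0 Hdc).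
change (al s) with A in Da. change (be s) with B in Db. change (ga s) with C in Dc.
set (a1 := al (s+h)) in *. set (b1 := be (s+h)) in *. set (c1 := ga (s+h)) in *.
set (qa := (a1 - A)/h) in *. set (qb := (b1 - B)/h) in *. set (qc := (c1 - C)/h) in *.
assert (He21 : e2 <= 1) by apply Rmin_l.
assert (He22 : e2 <= eps / (2*N)) by apply Rmin_r.
assert (Qa : Rabs qa <= Rabs a' + 1).
{ replace qa with ((qa - a') + a') by ring. eapply Rle_trans; [apply Rabs_triang|]. lra. }
assert (Qb : Rabs qb <= Rabs b' + 1).
{ replace qb with ((qb - b') + b') by ring. eapply Rle_trans; [apply Rabs_triang|]. lra. }
assert (Qc : Rabs qc <= Rabs c' + 1).
{ replace qc with ((qc - c') + c') by ring. eapply Rle_trans; [apply Rabs_triang|]. lra. }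
assert (Hah : Rabs h * M < eta).
{ apply Rmult_lt_reg_r with (/M). apply Rinv_0_lt_compat; lra.
  rewrite Rmult_assoc, Rinv_r by lra. rewrite Rmult_1_r. exact HdM'. }
assert (Ea : a1 - A = qa * h) by (unfold qa; field; auto).
assert (Eb : b1 - B = qb * h) by (unfold qb; field; auto).
assert (Ec : c1 - C = qc * h) by (unfold qc; field; auto).
pose proof (Rabs_pos h). pose proof (Rabs_pos a'). pose proof (Rabs_pos b'). pose proof (Rabs_pos c').
assert (Ra : Rabs (a1 - A) < eta).
{ rewrite Ea, Rabs_mult. eapply Rle_lt_trans; [|exact Hah].
  rewrite Rmult_comm. apply Rmult_le_compat_l; [lra|]. unfold M; lra. }
assert (Rb : Rabs (b1 - B) < eta).
{ rewrite Eb, Rabs_mult. eapply Rle_lt_trans; [|exact Hah].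
  rewrite Rmult_comm. apply Rmult_le_compat_l; [lra|]. unfold M; lra. }
assert (Rc : Rabs (c1 - C) < eta).
{ rewrite Ec, Rabs_mult. eapply Rle_lt_trans; [|exact Hah].
  rewrite Rmult_comm. apply Rmult_le_compat_l; [lra|]. unfold M; lra. }
destruct (mvt1 (fun t => G t b1 c1) A a1) as [x1 [X1 E1]]. { intro t. exact (proj1 (HP t b1 c1)). }
destruct (mvt1 (fun t => G A t c1) B b1) as [x2 [X2 E2]]. { intro t. exact (proj1 (proj2 (HP A t c1))). }
destruct (mvt1 (fun t => G A B t) C c1) as [x3 [X3 E3]]. { intro t. exact (proj2 (proj2 (HP A B t))). }
change (Derive (fun t => G t b1 c1) x1) with (D1 G x1 b1 c1) in E1.
change (Derive (fun t => G A t c1) x2) with (D2 G A x2 c1) in E2.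
change (Derive (fun t => G A B t) x3) with (D3 G A B x3) in E3.
assert (F1 : Rabs (D1 G x1 b1 c1 - D1 G A B C) < e1) by (apply K1; lra).
assert (F2 : Rabs (D2 G A x2 c1 - D2 G A B C) < e1).
{ apply K2; try lra. rewrite Rminus_eq_0, Rabs_R0; lra. }
assert (F3 : Rabs (D3 G A B x3 - D3 G A B C) < e1).
{ apply K3; try lra; rewrite Rminus_eq_0, Rabs_R0; lra. }
assert (Eq : (G a1 b1 c1 - G A B C) / h =
   D1 G x1 b1 c1 * qa + D2 G A x2 c1 * qb + D3 G A B x3 * qc).
{ replace (G a1 b1 c1 - G A B C) with
    ((G a1 b1 c1 - G A b1 c1) + (G A b1 c1 - G A B c1) + (G A B c1 - G A B C)) by ring.
  rewrite E1, E2, E3, Ea, Eb, Ec. field. auto. }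
change (G (al s) (be s) (ga s)) with (G A B C). rewrite Eq.
set (u1 := D1 G x1 b1 c1 - D1 G A B C) in *.
set (u2 := D2 G A x2 c1 - D2 G A B C) in *.
set (u3 := D3 G A B x3 - D3 G A B C) in *.
replace (D1 G x1 b1 c1 * qa + D2 G A x2 c1 * qb + D3 G A B x3 * qc -
  (D1 G A B C * a' + D2 G A B C * b' + D3 G A B C * c')) with
  ((u1 * qa + u2 * qb + u3 * qc) + (D1 G A B C * (qa - a') + D2 G A B C * (qb - b') + D3 G A B C * (qc - c')))
  by (unfold u1, u2, u3; ring).
assert (T1 : Rabs (u1 * qa + u2 * qb + u3 * qc) < e1 * (3 * M)).
{ eapply Rle_lt_trans; [apply Rabs_triang|]. eapply Rle_lt_trans; [apply Rplus_le_compat_r, Rabs_triang|].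
  rewrite !Rabs_mult.
  assert (Rabs u1 * Rabs qa <= Rabs u1 * M) by (apply Rmult_le_compat_l; [apply Rabs_pos| unfold M; lra]).
  assert (Rabs u2 * Rabs qb <= Rabs u2 * M) by (apply Rmult_le_compat_l; [apply Rabs_pos| unfold M; lra]).
  assert (Rabs u3 * Rabs qc <= Rabs u3 * M) by (apply Rmult_le_compat_l; [apply Rabs_pos| unfold M; lra]).
  assert (Rabs u1 * M < e1 * M) by (apply Rmult_lt_compat_r; lra).
  assert (Rabs u2 * M < e1 * M) by (apply Rmult_lt_compat_r; lra).
  assert (Rabs u3 * M < e1 * M) by (apply Rmult_lt_compat_r; lra).
  lra. }
assert (T2 : Rabs (D1 G A B C * (qa - a') + D2 G A B C * (qb - b') + D3 G A B C * (qc - c')) <= e2 * N).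
{ eapply Rle_trans; [apply Rabs_triang|]. eapply Rle_trans; [apply Rplus_le_compat_r, Rabs_triang|].
  rewrite !Rabs_mult.
  assert (Rabs (D1 G A B C) * Rabs (qa - a') <= Rabs (D1 G A B C) * e2) by (apply Rmult_le_compat_l; [apply Rabs_pos|lra]).
  assert (Rabs (D2 G A B C) * Rabs (qb - b') <= Rabs (D2 G A B C) * e2) by (apply Rmult_le_compat_l; [apply Rabs_pos|lra]).
  assert (Rabs (D3 G A B C) * Rabs (qc - c') <= Rabs (D3 G A B C) * e2) by (apply Rmult_le_compat_l; [apply Rabs_pos|lra]).
  unfold N. nra. }
assert (e1 * (3*M) = eps/2) by (unfold e1; field; lra).
assert (e2 * N <= eps/2).
{ apply Rle_trans with (eps / (2*N) * N). apply Rmult_le_compat_r; lra. right; field; lra. }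
eapply Rle_lt_trans; [apply Rabs_triang|]. lra.
Qed.


Definition Comp (G u v w : fun3) : fun3 := fun x y e => G (u x y e) (v x y e) (w x y e).

Ltac fext := repeat (apply functional_extensionality; intro).

Lemma Cn3_comp n : forall G u v w, smooth3 G -> Cn3 n u -> Cn3 n v -> Cn3 n w -> Cn3 n (Comp G u v w).
Proof.
induction n; intros G u v w HG Hu Hv Hw.
{ apply cont3_iff; unfold Comp; apply cont3_comp; apply cont3_iff; [exact (smooth3_cont G HG)|exact Hu|exact Hv|exact Hw]. }
pose proof (Cn3_partials _ _ Hu) as Pu. pose proof (Cn3_partials _ _ Hv) as Pv. pose proof (Cn3_partials _ _ Hw) as Pw.
pose proof (Cn3_down _ _ Hu) as Hu'. pose proof (Cn3_down _ _ Hv) as Hv'. pose proof (Cn3_down _ _ Hw) as Hw'.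
destruct Hu as [Cu [_ [U1 [U2 U3]]]]. destruct Hv as [Cv [_ [V1 [V2 V3]]]]. destruct Hw as [Cw [_ [W1 [W2 W3]]]].
assert (HP := smooth3_partials G HG).
assert (C1 := smooth3_cont _ (smooth3_D1 G HG)).
assert (C2 := smooth3_cont _ (smooth3_D2 G HG)).
assert (C3 := smooth3_cont _ (smooth3_D3 G HG)).
assert (E1 : forall x y e, is_derive (fun t => Comp G u v w t y e) x
   (Comp (D1 G) u v w x y e * D1 u x y e + Comp (D2 G) u v w x y e * D1 v x y e + Comp (D3 G) u v w x y e * D1 w x y e)).
{ intros x y e. unfold Comp. apply (chain3 G (fun t => u t y e) (fun t => v t y e) (fun t => w t y e)); try assumption; apply Derive_correct; ptac. }
assert (E2 : forall x y e, is_derive (fun t => Comp G u v w x t e) y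
   (Comp (D1 G) u v w x y e * D2 u x y e + Comp (D2 G) u v w x y e * D2 v x y e + Comp (D3 G) u v w x y e * D2 w x y e)).
{ intros x y e. unfold Comp. apply (chain3 G (fun t => u x t e) (fun t => v x t e) (fun t => w x t e)); try assumption; apply Derive_correct; ptac. }
assert (E3 : forall x y e, is_derive (fun t => Comp G u v w x y t) e
   (Comp (D1 G) u v w x y e * D3 u x y e + Comp (D2 G) u v w x y e * D3 v x y e + Comp (D3 G) u v w x y e * D3 w x y e)).
{ intros x y e. unfold Comp. apply (chain3 G (fun t => u x y t) (fun t => v x y t) (fun t => w x y t)); try assumption; apply Derive_correct; ptac. }
split. { apply cont3_iff; unfold Comp; apply cont3_comp; apply cont3_iff; [exact (smooth3_cont G HG)|exact Cu|exact Cv|exact Cw]. }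
split. { intros x y e. refine (conj _ (conj _ _)); eexists; [apply E1|apply E2|apply E3]. }
assert (F1 : D1 (Comp G u v w) = fun x y e => Comp (D1 G) u v w x y e * D1 u x y e + Comp (D2 G) u v w x y e * D1 v x y e + Comp (D3 G) u v w x y e * D1 w x y e).
{ fext. unfold D1 at 1. apply Derive_eq, E1. }
assert (F2 : D2 (Comp G u v w) = fun x y e => Comp (D1 G) u v w x y e * D2 u x y e + Comp (D2 G) u v w x y e * D2 v x y e + Comp (D3 G) u v w x y e * D2 w x y e).
{ fext. unfold D2 at 1. apply Derive_eq, E2. }
assert (F3 : D3 (Comp G u v w) = fun x y e => Comp (D1 G) u v w x y e * D3 u x y e + Comp (D2 G) u v w x y e * D3 v x y e + Comp (D3 G) u v w x y e * D3 w x y e).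
{ fext. unfold D3 at 1. apply Derive_eq, E3. }
rewrite F1, F2, F3.
refine (conj _ (conj _ _));
repeat apply Cn3_plus; apply Cn3_mult; try assumption; apply IHn; auto using smooth3_D1, smooth3_D2, smooth3_D3.
Qed.

Lemma smooth3_comp G u v w : smooth3 G -> smooth3 u -> smooth3 v -> smooth3 w -> smooth3 (Comp G u v w).
Proof. intros HG Hu Hv Hw n. apply Cn3_comp; auto. Qed.

Lemma Cn3_inv n : forall f, (forall x y e, f x y e <> 0) -> Cn3 n f -> Cn3 n (fun x y e => / f x y e).
Proof.
induction n; intros f Hnz Hf.
{ apply cont3_iff. apply cont3_iff in Hf. intros x y e eps He.
  assert (Hc : continuous (fun p : R*R*R => / f (fst (fst p)) (snd (fst p)) (snd p)) (x,y,e)).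
  { apply (continuous_comp (fun p : R*R*R => f (fst (fst p)) (snd (fst p)) (snd p)) Rinv).
    apply cont3_iff in Hf. apply Hf. apply continuity_pt_filterlim. apply continuity_pt_inv.
    apply continuity_pt_id. apply Hnz. }
  assert (Hc' : continuous3 (fun x y e => / f x y e)).
  { intros x' y' e'. apply (continuous_comp (fun p : R*R*R => f (fst (fst p)) (snd (fst p)) (snd p)) Rinv).
    apply cont3_iff in Hf. apply Hf. apply continuity_pt_filterlim. apply continuity_pt_inv.
    apply continuity_pt_id. apply Hnz. }
  apply cont3_iff in Hc'. apply Hc'; auto. }
pose proof (Cn3_partials _ _ Hf) as Pf. pose proof (Cn3_down _ _ Hf) as Hf'.
assert (HC : continuous3 (fun x y e => / f x y e)).
{ intros x' y' e'. apply (continuous_comp (fun p : R*R*R => f (fst (fst p)) (snd (fst p)) (snd p)) Rinv).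
  apply (Cn3_cont _ _ Hf). apply continuity_pt_filterlim. apply continuity_pt_inv.
  apply continuity_pt_id. apply Hnz. }
destruct Hf as [Cf [_ [F1 [F2 F3]]]].
assert (E1 : D1 (fun x y e => / f x y e) = (fun x y e => (fun _ _ _ => -1) x y e * D1 f x y e * ((fun x y e => / f x y e) x y e * (fun x y e => / f x y e) x y e))).
{ apply functional_extensionality; intro x; apply functional_extensionality; intro y; apply functional_extensionality; intro e. unfold D1; cbv beta. rewrite (Derive_inv (fun t => f t y e)); [field; apply Hnz|ptac|apply Hnz]. }
assert (E2 : D2 (fun x y e => / f x y e) = (fun x y e => (fun _ _ _ => -1) x y e * D2 f x y e * ((fun x y e => / f x y e) x y e * (fun x y e => / f x y e) x y e))).
{ apply functional_extensionality; intro x; apply functional_extensionality; intro y; apply functional_extensionality; intro e. unfold D2; cbv beta. rewrite (Derive_inv (fun t => f x t e)); [field; apply Hnz|ptac|apply Hnz]. }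
assert (E3 : D3 (fun x y e => / f x y e) = (fun x y e => (fun _ _ _ => -1) x y e * D3 f x y e * ((fun x y e => / f x y e) x y e * (fun x y e => / f x y e) x y e))).
{ apply functional_extensionality; intro x; apply functional_extensionality; intro y; apply functional_extensionality; intro e. unfold D3; cbv beta. rewrite (Derive_inv (fun t => f x y t)); [field; apply Hnz|ptac|apply Hnz]. }
split; [exact HC|]. split.
{ intros x y e. refine (conj _ (conj _ _)).
  apply (ex_derive_inv (fun t => f t y e)); [ptac|apply Hnz].
  apply (ex_derive_inv (fun t => f x t e)); [ptac|apply Hnz].
  apply (ex_derive_inv (fun t => f x y t)); [ptac|apply Hnz]. }
rewrite E1, E2, E3.
assert (Hi : Cn3 n (fun x y e => / f x y e)) by (apply IHn; assumption).
refine (conj _ (conj _ _)); apply Cn3_mult; try (apply Cn3_mult; [apply Cn3_const|assumption]);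
apply Cn3_mult; exact Hi.
Qed.

Lemma smooth3_inv f : (forall x y e, f x y e <> 0) -> smooth3 f -> smooth3 (fun x y e => / f x y e).
Proof. intros H1 H2 n. apply Cn3_inv; auto. Qed.

Lemma Cn3_tower (F : nat -> R -> R) : (forall k s, is_derive (F k) s (F (S k) s)) ->
  forall n k, Cn3 n (fun x _ _ => F k x).
Proof.
intros HF n. induction n; intro k.
{ apply cont3_iff. intros x y e eps He.
  assert (Hc : continuous (F k) x) by (apply (ex_derive_continuous (F k) x); eexists; apply HF).
  apply filterlim_locally with (eps := mkposreal eps He) in Hc. destruct Hc as [d Hd].
  exists d. split; [apply cond_pos|]. intros. apply (Hd x'). auto. }
assert (HC : continuous3 (fun x _ _ => F k x)) by (apply (Cn3_cont n), IHn).
split; [exact HC|]. split.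
{ intros x y e. refine (conj _ (conj _ _)); [eexists; apply HF|apply ex_derive_const|apply ex_derive_const]. }
assert (E1 : D1 (fun x _ _ => F k x) = fun x _ _ => F (S k) x) by (fext; unfold D1; apply Derive_eq, HF).
assert (E2 : D2 (fun x _ _ => F k x) = fun _ _ _ => 0) by (fext; unfold D2; apply Derive_const).
assert (E3 : D3 (fun x _ _ => F k x) = fun _ _ _ => 0) by (fext; unfold D3; apply Derive_const).
rewrite E1, E2, E3. refine (conj _ (conj _ _)); auto using Cn3_const.
Qed.


Lemma cpt_intro (f : R -> R) x : (forall eps, 0 < eps -> exists d, 0 < d /\ forall x', Rabs (x' - x) < d -> Rabs (f x' - f x) < eps) -> continuity_pt f x.
Proof.
intros H. unfold continuity_pt, continue_in, limit1_in, limit_in. intros eps He.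
destruct (H eps He) as [d [Hd H']]. exists d. split; [lra|]. intros x' [_ Hx]. simpl in *. unfold R_dist in *. auto.
Qed.

Lemma cont3_r1 f y e x : cont3 f -> continuity_pt (fun s => f s y e) x.
Proof. intros H. apply cpt_intro. intros eps He. destruct (H x y e eps He) as [d [Hd H']].
exists d. split; auto. intros. apply H'; auto; rewrite Rminus_eq_0, Rabs_R0; auto. Qed.
Lemma cont3_r2 f x e y : cont3 f -> continuity_pt (fun s => f x s e) y.
Proof. intros H. apply cpt_intro. intros eps He. destruct (H x y e eps He) as [d [Hd H']].
exists d. split; auto. intros. apply H'; auto; rewrite Rminus_eq_0, Rabs_R0; auto. Qed.
Lemma cont3_r3 f x y e : cont3 f -> continuity_pt (fun s => f x y s) e.
Proof. intros H. apply cpt_intro. intros eps He. destruct (H x y e eps He) as [d [Hd H']].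
exists d. split; auto. intros. apply H'; auto; rewrite Rminus_eq_0, Rabs_R0; auto. Qed.

Lemma c2_comp3 (G : fun3) a b c s t : cont3 G -> continuity_2d_pt a s t -> continuity_2d_pt b s t -> continuity_2d_pt c s t ->
  continuity_2d_pt (fun s t => G (a s t) (b s t) (c s t)) s t.
Proof.
intros HG Ha Hb Hc eps.
destruct (HG (a s t) (b s t) (c s t) eps (cond_pos eps)) as [d [Hd H]].
destruct (Ha (mkposreal d Hd)) as [d1 H1]. destruct (Hb (mkposreal d Hd)) as [d2 H2]. destruct (Hc (mkposreal d Hd)) as [d3 H3].
assert (Hm : 0 < Rmin d1 (Rmin d2 d3)) by (repeat apply Rmin_pos; apply cond_pos).
exists (mkposreal _ Hm). intros u v Hu Hv. simpl in Hu, Hv.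
pose proof (Rmin_l d1 (Rmin d2 d3)). pose proof (Rmin_r d1 (Rmin d2 d3)). pose proof (Rmin_l d2 d3). pose proof (Rmin_r d2 d3).
apply H; [apply H1|apply H2|apply H3]; lra.
Qed.

Lemma c2_pow k s t : continuity_2d_pt (fun _ t => t ^ k) s t.
Proof.
induction k; simpl.
- apply continuity_2d_pt_const.
- apply (continuity_2d_pt_mult (fun _ t => t) (fun _ t => t ^ k)); auto. apply continuity_2d_pt_id2.
Qed.

Lemma c2_of1 (f : R -> R) s t : continuity_pt f s -> continuity_2d_pt (fun s _ => f s) s t.
Proof. intros H. apply (continuity_1d_2d_pt_comp f (fun s _ => s)); auto. apply continuity_2d_pt_id1. Qed.

Lemma seg_unif G U V W1 W2 eps : cont3 G -> 0 < eps -> exists eta, 0 < eta /\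
  forall U' V' W1' W2', Rabs (U'-U) < eta -> Rabs (V'-V) < eta -> Rabs (W1'-W1) < eta -> Rabs (W2'-W2) < eta ->
  forall t, 0 <= t <= 1 -> Rabs (G (U' + t*V') W1' W2' - G (U + t*V) W1 W2) < eps.
Proof.
intros HG He.
assert (Hd : forall t0, {d : posreal | forall a b c, Rabs (a - (U + t0*V)) < d -> Rabs (b - W1) < d -> Rabs (c - W2) < d ->
   Rabs (G a b c - G (U + t0*V) W1 W2) < eps/2}).
{ intro t0. apply constructive_indefinite_description.
  destruct (HG (U + t0*V) W1 W2 (eps/2)) as [d [Hd H]]; [lra|].
  exists (mkposreal d Hd). simpl. exact H. }
set (KV := 2 * (Rabs V + 1)).
assert (HKV : 0 < KV) by (unfold KV; pose proof (Rabs_pos V); lra).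
set (del := fun t0 => mkposreal (proj1_sig (Hd t0) / KV) (Rdiv_lt_0_compat _ _ (cond_pos _) HKV)).
destruct (compactness_value_1d 0 1 del) as [d Hdd].
exists d. split; [apply cond_pos|].
intros U' V' W1' W2' HU HV HW1 HW2 t Ht.
specialize (Hdd t Ht).
apply NNPP. intro Hn. apply Hdd. intros [t0 [Ht0 [Htt0 Hdl]]]. apply Hn.
destruct (Hd t0) as [D HD] eqn:EHD.
unfold del in Htt0, Hdl. simpl in Htt0, Hdl. rewrite EHD in Htt0, Hdl. simpl in Htt0, Hdl.
assert (EDK : D / KV * KV = D) by (field; lra).
pose proof (Rabs_pos V). pose proof (cond_pos D). pose proof (cond_pos d).
assert (Hdv : 0 < D / KV) by (apply Rdiv_lt_0_compat; lra).
assert (A1 : Rabs ((t - t0) * V) <= D / KV * Rabs V).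
{ rewrite Rabs_mult. apply Rmult_le_compat_r; lra. }
assert (A2 : Rabs (t * (V' - V)) <= Rabs (V' - V)).
{ rewrite Rabs_mult. rewrite (Rabs_pos_eq t) by lra.
  pose proof (Rabs_pos (V'-V)). nra. }
assert (B1 : Rabs (U + t*V - (U + t0*V)) < D).
{ replace (U + t*V - (U + t0*V)) with ((t - t0) * V) by ring.
  eapply Rle_lt_trans; [exact A1|]. unfold KV in *. nra. }
assert (B2 : Rabs (U' + t*V' - (U + t0*V)) < D).
{ replace (U' + t*V' - (U + t0*V)) with ((U' - U) + (t * (V' - V) + (t - t0) * V)) by ring.
  eapply Rle_lt_trans; [apply Rabs_triang|].
  eapply Rle_lt_trans; [apply Rplus_le_compat_l, Rabs_triang|]. unfold KV in *. nra. }
assert (KV1 : D / KV <= D). { assert (KV >= 2) by (unfold KV; lra). set (q := D / KV) in *. rewrite <- EDK. nra. }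
assert (C1 : Rabs (G (U' + t*V') W1' W2' - G (U + t0*V) W1 W2) < eps/2).
{ apply HD; auto; lra. }
assert (C2 : Rabs (G (U + t*V) W1 W2 - G (U + t0*V) W1 W2) < eps/2).
{ apply HD; auto; rewrite Rminus_eq_0, Rabs_R0; apply cond_pos. }
replace (G (U' + t*V') W1' W2' - G (U + t*V) W1 W2) with
  ((G (U' + t*V') W1' W2' - G (U + t0*V) W1 W2) - (G (U + t*V) W1 W2 - G (U + t0*V) W1 W2)) by ring.
eapply Rle_lt_trans; [apply Rabs_triang|]. rewrite Rabs_Ropp. lra.
Qed.


Lemma isd_plus (f g : R -> R) (x a b : R) : is_derive f x a -> is_derive g x b -> is_derive (fun t => f t + g t) x (a + b).
Proof. intros H1 H2. exact (is_derive_plus f g x a b H1 H2). Qed.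
Lemma isd_const (c x : R) : is_derive (fun _ => c) x 0.
Proof. apply is_derive_Reals, derivable_pt_lim_const. Qed.
Lemma isd_id (x : R) : is_derive (fun t => t) x 1.
Proof. apply is_derive_Reals, derivable_pt_lim_id. Qed.
Lemma isd_ext_val (f : R -> R) (x a b : R) : is_derive f x a -> a = b -> is_derive f x b.
Proof. intros H ->. exact H. Qed.
Lemma isd_scal (c : R) (f : R -> R) (x a : R) : is_derive f x a -> is_derive (fun t => c * f t) x (c * a).
Proof. intros H. eapply isd_ext_val. apply (Derive.is_derive_mult (fun _ => c) f x 0 a (isd_const c x) H). ring. Qed.
Lemma isd_mult (f g : R -> R) (x a b : R) : is_derive f x a -> is_derive g x b -> is_derive (fun t => f t * g t) x (a * g x + f x * b).
Proof. intros. now apply Derive.is_derive_mult. Qed.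

Lemma pow01 t k : 0 <= t <= 1 -> 0 <= t ^ k <= 1.
Proof. intros Ht. induction k; simpl; [lra|]. nra. Qed.

Lemma cpt_pow k t : continuity_pt (fun t => t ^ k) t.
Proof. apply derivable_continuous_pt. apply derivable_pt_pow. Qed.

Lemma cpt_seg (H : fun3) U V W1 W2 t0 : cont3 H -> continuity_pt (fun t => H (U + t*V) W1 W2) t0.
Proof.
intros HH. apply cpt_intro. intros eps He.
destruct (HH (U + t0*V) W1 W2 eps He) as [d [Hd H']].
exists (d / (Rabs V + 1)). split. { apply Rdiv_lt_0_compat; [lra|]. pose proof (Rabs_pos V); lra. }
intros t Ht. apply H'; try (rewrite Rminus_eq_0, Rabs_R0; lra).
replace (U + t*V - (U + t0*V)) with ((t - t0) * V) by ring. rewrite Rabs_mult.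
pose proof (Rabs_pos V). pose proof (Rabs_pos (t - t0)).
assert (Rabs (t - t0) * (Rabs V + 1) < d).
{ apply Rmult_lt_reg_r with (/ (Rabs V + 1)). apply Rinv_0_lt_compat; lra.
  rewrite Rmult_assoc, Rinv_r, Rmult_1_r by lra. exact Ht. }
nra.
Qed.

Lemma cpt_integrand (H : fun3) k U V W1 W2 c t0 : cont3 H -> continuity_pt (fun t => t ^ k * H (U + t*V) W1 W2 * c) t0.
Proof.
intros HH. apply (continuity_pt_mult (fun t => t ^ k * H (U + t*V) W1 W2) (fun _ => c)).
apply (continuity_pt_mult (fun t => t ^ k) (fun t => H (U + t*V) W1 W2)).
apply cpt_pow. apply cpt_seg; auto. apply continuity_pt_const. intros ? ?; auto.
Qed.

Lemma exRI (H : fun3) k U V W1 W2 c : cont3 H -> ex_RInt (fun t => t ^ k * H (U + t*V) W1 W2 * c) 0 1.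
Proof. intros HH. apply (ex_RInt_continuous (V:=R_CompleteNormedModule)). intros z _. apply continuity_pt_filterlim. apply cpt_integrand; auto. Qed.

Lemma exRI1 (H : fun3) k U V W1 W2 : cont3 H -> ex_RInt (fun t => t ^ k * H (U + t*V) W1 W2) 0 1.
Proof. intros HH. eapply ex_RInt_ext; [|apply (exRI H k U V W1 W2 1 HH)]. intros; simpl; ring. Qed.

Lemma RInt_plusR f g a b : ex_RInt f a b -> ex_RInt g a b -> RInt (fun t => f t + g t) a b = RInt f a b + RInt g a b.
Proof. intros H1 H2. exact (RInt_plus f g a b H1 H2). Qed.
Lemma RInt_minusR f g a b : ex_RInt f a b -> ex_RInt g a b -> RInt (fun t => f t - g t) a b = RInt f a b - RInt g a b.
Proof. intros H1 H2. exact (RInt_minus f g a b H1 H2). Qed.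
Lemma RInt_multR f c a b : ex_RInt f a b -> RInt (fun t => f t * c) a b = RInt f a b * c.
Proof. intros H1. pose proof (RInt_scal f a b c H1) as E. change (RInt (fun x => c * f x) a b = c * RInt f a b) in E.
rewrite Rmult_comm, <- E. apply RInt_ext. intros x _. apply Rmult_comm. Qed.

Lemma exRI_minus (f g : R -> R) a b : ex_RInt f a b -> ex_RInt g a b -> ex_RInt (fun t => f t - g t) a b.
Proof. intros H1 H2. exact (ex_RInt_minus f g a b H1 H2). Qed.

Definition Mk (k : nat) (G u v w1 w2 : fun3) : fun3 :=
  fun x y e => RInt (fun t => t ^ k * G (u x y e + t * v x y e) (w1 x y e) (w2 x y e)) 0 1.

Lemma Mk_cont k G u v w1 w2 : cont3 G -> cont3 u -> cont3 v -> cont3 w1 -> cont3 w2 -> cont3 (Mk k G u v w1 w2).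
Proof.
intros HG Hu Hv Hw1 Hw2 x y e eps He.
destruct (seg_unif G (u x y e) (v x y e) (w1 x y e) (w2 x y e) (eps/2) HG ltac:(lra)) as [eta [Heta HS]].
destruct (Hu x y e eta Heta) as [d1 [Hd1 H1]]. destruct (Hv x y e eta Heta) as [d2 [Hd2 H2]].
destruct (Hw1 x y e eta Heta) as [d3 [Hd3 H3]]. destruct (Hw2 x y e eta Heta) as [d4 [Hd4 H4]].
exists (Rmin (Rmin d1 d2) (Rmin d3 d4)). split. { repeat apply Rmin_pos; auto. }
intros x' y' e' Ha Hb Hc.
pose proof (Rmin_l (Rmin d1 d2) (Rmin d3 d4)). pose proof (Rmin_r (Rmin d1 d2) (Rmin d3 d4)).
pose proof (Rmin_l d1 d2). pose proof (Rmin_r d1 d2). pose proof (Rmin_l d3 d4). pose proof (Rmin_r d3 d4).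
unfold Mk. rewrite <- RInt_minusR by (apply exRI1; auto).
eapply Rle_lt_trans. apply (abs_RInt_le_const _ 0 1 (eps/2)). lra.
apply exRI_minus; apply exRI1; auto.
intros t Ht. rewrite <- Rmult_minus_distr_l, Rabs_mult.
destruct (pow01 t k Ht). rewrite (Rabs_pos_eq (t^k)) by lra.
assert (Rabs (G (u x' y' e' + t * v x' y' e') (w1 x' y' e') (w2 x' y' e') - G (u x y e + t * v x y e) (w1 x y e) (w2 x y e)) < eps/2).
{ apply HS; auto; [apply H1|apply H2|apply H3|apply H4]; lra. }
pose proof (Rabs_pos (G (u x' y' e' + t * v x' y' e') (w1 x' y' e') (w2 x' y' e') - G (u x y e + t * v x y e) (w1 x y e) (w2 x y e))).
nra. lra.
Qed.


Lemma exRI_plus (f g : R -> R) a b : ex_RInt f a b -> ex_RInt g a b -> ex_RInt (fun t => f t + g t) a b.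
Proof. intros H1 H2. exact (ex_RInt_plus f g a b H1 H2). Qed.

Ltac exri := match goal with
 | |- ex_RInt (fun t => @?f t + @?g t) _ _ => apply (exRI_plus f g); exri
 | |- ex_RInt _ _ _ => apply exRI; assumption end.

Ltac c2 :=
 first [ apply continuity_2d_pt_id2 | apply continuity_2d_pt_id1 |
  match goal with
 | |- continuity_2d_pt (fun s t => @?f s t + @?g s t) _ _ => apply (continuity_2d_pt_plus f g); c2
 | |- continuity_2d_pt (fun s t => @?f s t * @?g s t) _ _ => apply (continuity_2d_pt_mult f g); c2
 | |- continuity_2d_pt (fun s t => t ^ _) _ _ => apply c2_pow
 | |- continuity_2d_pt (fun s t => ?G (@?a s t) (@?b s t) (@?c s t)) _ _ => apply (c2_comp3 G a b c); [assumption| c2 | c2 | c2]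
 | |- continuity_2d_pt (fun s t => @?f s) _ _ => apply (c2_of1 f)
 end].

Lemma cpt_of_derive (U U' : R -> R) s : (forall s, is_derive U s (U' s)) -> continuity_pt U s.
Proof. intros H. apply continuity_pt_filterlim. apply (ex_derive_continuous U s). eexists; apply H. Qed.

Lemma Mk_deriv_gen k (G : fun3) (U V W1 W2 U' V' W1' W2' : R -> R) s0 :
  has_partials3 G -> cont3 (D1 G) -> cont3 (D2 G) -> cont3 (D3 G) -> cont3 G ->
  (forall s, is_derive U s (U' s)) -> (forall s, is_derive V s (V' s)) ->
  (forall s, is_derive W1 s (W1' s)) -> (forall s, is_derive W2 s (W2' s)) ->
  (forall s, continuity_pt U' s) -> (forall s, continuity_pt V' s) ->
  (forall s, continuity_pt W1' s) -> (forall s, continuity_pt W2' s) ->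
  is_derive (fun s => RInt (fun t => t^k * G (U s + t * V s) (W1 s) (W2 s)) 0 1) s0
   (RInt (fun t => t^k * D1 G (U s0 + t * V s0) (W1 s0) (W2 s0)) 0 1 * U' s0
    + RInt (fun t => t^(S k) * D1 G (U s0 + t * V s0) (W1 s0) (W2 s0)) 0 1 * V' s0
    + RInt (fun t => t^k * D2 G (U s0 + t * V s0) (W1 s0) (W2 s0)) 0 1 * W1' s0
    + RInt (fun t => t^k * D3 G (U s0 + t * V s0) (W1 s0) (W2 s0)) 0 1 * W2' s0).
Proof.
intros HP C1 C2 C3 C0 HU HV HW1 HW2 KU KV KW1 KW2.
set (psi := fun s t => t^k * (D1 G (U s + t*V s) (W1 s) (W2 s) * (U' s + t * V' s) + D2 G (U s + t*V s) (W1 s) (W2 s) * W1' s + D3 G (U s + t*V s) (W1 s) (W2 s) * W2' s)).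
assert (HD : forall s t, is_derive (fun s => t^k * G (U s + t*V s) (W1 s) (W2 s)) s (psi s t)).
{ intros s t. unfold psi. apply isd_scal.
  apply (chain3 G (fun s => U s + t * V s) W1 W2 s (U' s + t * V' s) (W1' s) (W2' s) HP); try (apply cont3_iff; assumption); auto.
  apply isd_plus; auto. apply isd_scal; auto. }
assert (CU : forall s, continuity_pt U s) by (intro; apply (cpt_of_derive U U'); auto).
assert (CV : forall s, continuity_pt V s) by (intro; apply (cpt_of_derive V V'); auto).
assert (CW1 : forall s, continuity_pt W1 s) by (intro; apply (cpt_of_derive W1 W1'); auto).
assert (CW2 : forall s, continuity_pt W2 s) by (intro; apply (cpt_of_derive W2 W2'); auto).
eapply isd_ext_val.
{ apply (is_derive_RInt_param (fun s t => t^k * G (U s + t*V s) (W1 s) (W2 s)) 0 1 s0).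
  - apply filter_forall. intros s t _. eexists. apply HD.
  - intros t _. apply continuity_2d_pt_ext with (f := psi).
    { intros s' t'. symmetry. apply Derive_eq, HD. }
    unfold psi. c2; auto.
  - apply filter_forall. intros s. apply exRI1. auto. }
rewrite (RInt_ext _ (fun t => t^k * D1 G (U s0 + t * V s0) (W1 s0) (W2 s0) * U' s0
   + t^(S k) * D1 G (U s0 + t * V s0) (W1 s0) (W2 s0) * V' s0
   + t^k * D2 G (U s0 + t * V s0) (W1 s0) (W2 s0) * W1' s0
   + t^k * D3 G (U s0 + t * V s0) (W1 s0) (W2 s0) * W2' s0)).
2:{ intros t _. cbv beta. apply eq_trans with (psi s0 t). apply Derive_eq, HD. unfold psi. simpl. ring. }
rewrite !RInt_plusR; try exri.
rewrite !RInt_multR by (apply exRI1; assumption). reflexivity.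
Qed.


Lemma Cn3_Mk n : forall k G u v w1 w2, smooth3 G -> Cn3 n u -> Cn3 n v -> Cn3 n w1 -> Cn3 n w2 -> Cn3 n (Mk k G u v w1 w2).
Proof.
induction n; intros k G u v w1 w2 HG Hu Hv Hw1 Hw2.
{ apply cont3_iff, Mk_cont; apply cont3_iff; auto. apply smooth3_cont; auto. }
pose proof (Cn3_partials _ _ Hu) as Pu. pose proof (Cn3_partials _ _ Hv) as Pv.
pose proof (Cn3_partials _ _ Hw1) as Pw1. pose proof (Cn3_partials _ _ Hw2) as Pw2.
pose proof (Cn3_down _ _ Hu) as Hu'. pose proof (Cn3_down _ _ Hv) as Hv'.
pose proof (Cn3_down _ _ Hw1) as Hw1'. pose proof (Cn3_down _ _ Hw2) as Hw2'.
destruct Hu as [Cu [_ [U1 [U2 U3]]]]. destruct Hv as [Cv [_ [V1 [V2 V3]]]].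
destruct Hw1 as [Cw1 [_ [W11 [W12 W13]]]]. destruct Hw2 as [Cw2 [_ [W21 [W22 W23]]]].
assert (HP := smooth3_partials G HG).
assert (C0 := proj1 (cont3_iff _) (smooth3_cont _ HG)).
assert (C1 := proj1 (cont3_iff _) (smooth3_cont _ (smooth3_D1 G HG))).
assert (C2 := proj1 (cont3_iff _) (smooth3_cont _ (smooth3_D2 G HG))).
assert (C3 := proj1 (cont3_iff _) (smooth3_cont _ (smooth3_D3 G HG))).
assert (K := fun f (H : Cn3 n f) => proj1 (cont3_iff _) (Cn3_cont n f H)).
assert (E1 : forall x y e, is_derive (fun s => Mk k G u v w1 w2 s y e) x
  (Mk k (D1 G) u v w1 w2 x y e * D1 u x y e + Mk (S k) (D1 G) u v w1 w2 x y e * D1 v x y e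
   + Mk k (D2 G) u v w1 w2 x y e * D1 w1 x y e + Mk k (D3 G) u v w1 w2 x y e * D1 w2 x y e)).
{ intros x y e. unfold Mk.
  apply (Mk_deriv_gen k G (fun s => u s y e) (fun s => v s y e) (fun s => w1 s y e) (fun s => w2 s y e)
     (fun s => D1 u s y e) (fun s => D1 v s y e) (fun s => D1 w1 s y e) (fun s => D1 w2 s y e));
  try assumption; try (intro s; apply Derive_correct; ptac); intro s; apply cont3_r1; apply K; assumption. }
assert (E2 : forall x y e, is_derive (fun s => Mk k G u v w1 w2 x s e) y
  (Mk k (D1 G) u v w1 w2 x y e * D2 u x y e + Mk (S k) (D1 G) u v w1 w2 x y e * D2 v x y e
   + Mk k (D2 G) u v w1 w2 x y e * D2 w1 x y e + Mk k (D3 G) u v w1 w2 x y e * D2 w2 x y e)).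
{ intros x y e. unfold Mk.
  apply (Mk_deriv_gen k G (fun s => u x s e) (fun s => v x s e) (fun s => w1 x s e) (fun s => w2 x s e)
     (fun s => D2 u x s e) (fun s => D2 v x s e) (fun s => D2 w1 x s e) (fun s => D2 w2 x s e));
  try assumption; try (intro s; apply Derive_correct; ptac); intro s; apply cont3_r2; apply K; assumption. }
assert (E3 : forall x y e, is_derive (fun s => Mk k G u v w1 w2 x y s) e
  (Mk k (D1 G) u v w1 w2 x y e * D3 u x y e + Mk (S k) (D1 G) u v w1 w2 x y e * D3 v x y e
   + Mk k (D2 G) u v w1 w2 x y e * D3 w1 x y e + Mk k (D3 G) u v w1 w2 x y e * D3 w2 x y e)).
{ intros x y e. unfold Mk.
  apply (Mk_deriv_gen k G (fun s => u x y s) (fun s => v x y s) (fun s => w1 x y s) (fun s => w2 x y s)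
     (fun s => D3 u x y s) (fun s => D3 v x y s) (fun s => D3 w1 x y s) (fun s => D3 w2 x y s));
  try assumption; try (intro s; apply Derive_correct; ptac); intro s; apply cont3_r3; apply K; assumption. }
split. { apply cont3_iff, Mk_cont; apply cont3_iff; auto. apply smooth3_cont; auto. }
split. { intros x y e. refine (conj _ (conj _ _)); eexists; [apply E1|apply E2|apply E3]. }
assert (F1 : D1 (Mk k G u v w1 w2) = fun x y e => Mk k (D1 G) u v w1 w2 x y e * D1 u x y e + Mk (S k) (D1 G) u v w1 w2 x y e * D1 v x y e
   + Mk k (D2 G) u v w1 w2 x y e * D1 w1 x y e + Mk k (D3 G) u v w1 w2 x y e * D1 w2 x y e).
{ fext. unfold D1 at 1. apply Derive_eq, E1. }
assert (F2 : D2 (Mk k G u v w1 w2) = fun x y e => Mk k (D1 G) u v w1 w2 x y e * D2 u x y e + Mk (S k) (D1 G) u v w1 w2 x y e * D2 v x y e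
   + Mk k (D2 G) u v w1 w2 x y e * D2 w1 x y e + Mk k (D3 G) u v w1 w2 x y e * D2 w2 x y e).
{ fext. unfold D2 at 1. apply Derive_eq, E2. }
assert (F3 : D3 (Mk k G u v w1 w2) = fun x y e => Mk k (D1 G) u v w1 w2 x y e * D3 u x y e + Mk (S k) (D1 G) u v w1 w2 x y e * D3 v x y e
   + Mk k (D2 G) u v w1 w2 x y e * D3 w1 x y e + Mk k (D3 G) u v w1 w2 x y e * D3 w2 x y e).
{ fext. unfold D3 at 1. apply Derive_eq, E3. }
rewrite F1, F2, F3.
refine (conj _ (conj _ _));
repeat apply Cn3_plus; apply Cn3_mult; try assumption; apply IHn; auto using smooth3_D1, smooth3_D2, smooth3_D3.
Qed.

Lemma smooth3_Mk k G u v w1 w2 : smooth3 G -> smooth3 u -> smooth3 v -> smooth3 w1 -> smooth3 w2 -> smooth3 (Mk k G u v w1 w2).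
Proof. intros; intro n; apply Cn3_Mk; auto. Qed.


Lemma isd_comp (F g : R -> R) x a b : is_derive F (g x) a -> is_derive g x b -> is_derive (fun t => F (g t)) x (b * a).
Proof. intros H1 H2. exact (is_derive_comp F g x a b H1 H2). Qed.

Lemma isd_affine a v x : is_derive (fun t => a + t * v) x v.
Proof.
eapply isd_ext_val. apply (isd_plus (fun _ => a) (fun t => t * v) x 0 (1 * v + x * 0)). apply isd_const.
apply (isd_mult (fun t => t) (fun _ => v) x 1 0). apply isd_id. apply isd_const. ring.
Qed.

Lemma cpt_affine (F' : R -> R) a v t : (forall z, continuity_pt F' z) -> continuity_pt (fun t => F' (a + t * v)) t.
Proof.
intros HF. apply (continuity_pt_comp (fun t => a + t * v) F').
- apply derivable_continuous_pt. apply (derivable_pt_plus (fun _ => a) (fun t => t * v)).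
  apply derivable_pt_const. apply (derivable_pt_mult (fun t => t) (fun _ => v)). apply derivable_pt_id. apply derivable_pt_const.
- apply HF.
Qed.

Lemma hadamard1 (F F' : R -> R) a v : (forall z, is_derive F z (F' z)) -> (forall z, continuity_pt F' z) ->
  RInt (fun t => F' (a + t*v)) 0 1 * v = F (a+v) - F a.
Proof.
intros HD HC.
assert (Hi : is_RInt (fun t => F' (a + t*v) * v) 0 1 (minus (F (a + 1 * v)) (F (a + 0 * v)))).
{ apply (is_RInt_derive (fun t => F (a + t*v)) (fun t => F' (a + t*v) * v)).
  - intros x _. eapply isd_ext_val. apply (isd_comp F (fun t => a + t * v)). apply HD.
    apply isd_affine. ring.
  - intros x _. apply continuity_pt_filterlim. apply (continuity_pt_mult (fun t => F' (a + t*v)) (fun _ => v)).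
    apply cpt_affine; auto. apply continuity_pt_const. intros ? ?; auto. }
apply (is_RInt_unique (V:=R_CompleteNormedModule)) in Hi. rewrite <- RInt_multR. rewrite Hi. unfold minus, plus, opp; simpl.
rewrite Rmult_1_l, Rmult_0_l, Rplus_0_r. ring.
apply (ex_RInt_continuous (V:=R_CompleteNormedModule)). intros z _. apply continuity_pt_filterlim. apply cpt_affine; auto.
Qed.


Fixpoint peval (P : list R) (u : R) : R := match P with nil => 0 | c :: Q => c + u * peval Q u end.
Fixpoint padd (P Q : list R) : list R :=
  match P, Q with nil, _ => Q | _, nil => P | a :: P', b :: Q' => (a + b) :: padd P' Q' end.
Definition popp (P : list R) : list R := map Ropp P.
Fixpoint pder (P : list R) : list R := match P with nil => nil | c :: Q => padd Q (0 :: pder Q) end.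
Definition pnext (P : list R) : list R := 0 :: 0 :: padd P (popp (pder P)).

Lemma peval_padd P Q u : peval (padd P Q) u = peval P u + peval Q u.
Proof. revert Q; induction P as [|a P IH]; intros [|b Q]; simpl; try ring. rewrite IH. ring. Qed.
Lemma peval_popp P u : peval (popp P) u = - peval P u.
Proof. unfold popp. induction P as [|a P IH]; simpl; [ring|]. rewrite IH. ring. Qed.
Lemma pder_ok P u : is_derive (peval P) u (peval (pder P) u).
Proof.
induction P as [|c Q IH]; simpl.
- apply isd_const.
- rewrite peval_padd. simpl. eapply isd_ext_val.
  apply (isd_plus (fun _ => c) (fun u => u * peval Q u) u 0 (1 * peval Q u + u * peval (pder Q) u)).
  apply isd_const. apply (isd_mult (fun t => t) (peval Q)). apply isd_id. apply IH. ring.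
Qed.
Lemma peval_pnext P u : peval (pnext P) u = u * u * (peval P u - peval (pder P) u).
Proof. unfold pnext. simpl. rewrite peval_padd, peval_popp. ring. Qed.

Fixpoint Pn (n : nat) : list R := match n with O => 1 :: nil | S m => pnext (Pn m) end.
Definition En (n : nat) (s : R) : R := if Rlt_dec 0 s then peval (Pn n) (/ s) * exp (- / s) else 0.

Lemma peval_bound P : exists B N, 0 <= B /\ forall u, 1 <= u -> Rabs (peval P u) <= B * u ^ N.
Proof.
induction P as [|c Q [B [N [HB IH]]]].
- exists 0, O. split; [lra|]. intros. simpl. rewrite Rabs_R0. lra.
- exists (Rabs c + B), (S N). split. { pose proof (Rabs_pos c); lra. }
  intros u Hu. simpl. specialize (IH u Hu).
  assert (Hp : 1 <= u ^ N) by (apply pow_R1_Rle; lra).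
  eapply Rle_trans; [apply Rabs_triang|]. rewrite Rabs_mult, (Rabs_pos_eq u) by lra.
  pose proof (Rabs_pos c). pose proof (Rabs_pos (peval Q u)). change (u ^ S N) with (u * u ^ N).
  assert (H1 : 1 <= u * u ^ N) by nra. assert (H2 : u * Rabs (peval Q u) <= u * (B * u ^ N)) by (apply Rmult_le_compat_l; lra). nra.
Qed.

Lemma exp_INR_mult k x : exp (INR k * x) = exp x ^ k.
Proof. induction k. - simpl. rewrite Rmult_0_l, exp_0. reflexivity. - rewrite S_INR, Rmult_plus_distr_r, Rmult_1_l, exp_plus, IHk. simpl. ring. Qed.

Lemma exp_lower N u : 0 < u -> (u / (INR N + 1)) ^ (S N) <= exp u.
Proof.
intros Hu. assert (HN : 0 < INR N + 1) by (pose proof (pos_INR N); lra).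
replace u with (INR (S N) * (u / (INR N + 1))) at 2 by (rewrite S_INR; field; lra).
rewrite exp_INR_mult. apply pow_incr. split.
- apply Rlt_le, Rdiv_lt_0_compat; lra.
- pose proof (exp_ineq1_le (u / (INR N + 1))). lra.
Qed.

Lemma poly_exp_lim P eps : 0 < eps -> exists M, 0 < M /\ forall u, M < u -> Rabs (peval P u * exp (- u)) < eps.
Proof.
intros He. destruct (peval_bound P) as [B [N [HB HP]]].
set (C := (INR N + 1) ^ (S N)).
assert (HN : 0 < INR N + 1) by (pose proof (pos_INR N); lra).
assert (HC : 0 < C) by (apply pow_lt; lra).
exists (Rmax 1 (B * C / eps)). split. { eapply Rlt_le_trans; [|apply Rmax_l]; lra. }
intros u Hu. pose proof (Rmax_l 1 (B * C / eps)). pose proof (Rmax_r 1 (B * C / eps)).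
assert (Hu1 : 1 <= u) by lra.
rewrite Rabs_mult, (Rabs_pos_eq (exp (-u))) by (apply Rlt_le, exp_pos).
rewrite exp_Ropp.
assert (Hl := exp_lower N u ltac:(lra)).
assert (Hex : 0 < exp u) by apply exp_pos.
assert (Hq : 0 < (u / (INR N + 1)) ^ S N) by (apply pow_lt, Rdiv_lt_0_compat; lra).
assert (E1 : Rabs (peval P u) * / exp u <= B * u ^ N * / ((u / (INR N + 1)) ^ S N)).
{ apply Rmult_le_compat; try apply Rabs_pos. apply Rlt_le, Rinv_0_lt_compat; auto. apply HP; auto.
  apply Rinv_le_contravar; auto. }
assert (E2 : B * u ^ N * / ((u / (INR N + 1)) ^ S N) = B * C / u).
{ unfold C. unfold Rdiv at 1. rewrite Rpow_mult_distr, pow_inv. simpl. assert (u ^ N <> 0) by (apply pow_nonzero; lra). assert ((INR N + 1) ^ N <> 0) by (apply pow_nonzero; lra). field. repeat split; lra. }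
rewrite E2 in E1. eapply Rle_lt_trans; [exact E1|].
destruct (Req_dec B 0) as [->|HB0]. { unfold Rdiv; rewrite !Rmult_0_l. lra. }
apply Rmult_lt_reg_r with u; [lra|]. unfold Rdiv. rewrite Rmult_assoc, Rinv_l, Rmult_1_r by lra.
assert (B * C / eps < u) by lra.
apply Rmult_lt_reg_r with (/ eps). apply Rinv_0_lt_compat; lra.
replace (eps * u * / eps) with u by (field; lra). exact H1.
Qed.

Lemma En_pos_eq n s : 0 < s -> En n s = peval (Pn n) (/ s) * exp (- / s).
Proof. intros Hs. unfold En. destruct (Rlt_dec 0 s); [reflexivity|lra]. Qed.
Lemma En_npos n s : s <= 0 -> En n s = 0.
Proof. intros Hs. unfold En. destruct (Rlt_dec 0 s); [lra|reflexivity]. Qed.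

Lemma En_deriv n s : is_derive (En n) s (En (S n) s).
Proof.
destruct (Rtotal_order s 0) as [Hs|[Hs|Hs]].
- rewrite (En_npos (S n)) by lra.
  apply (is_derive_ext_loc (fun _ => 0)). 
  + exists (mkposreal (-s) ltac:(lra)). intros t Ht. assert (Rabs (t - s) < - s) by exact Ht.
    rewrite En_npos; auto. apply Rabs_def2 in H. lra.
  + apply isd_const.
- subst s. rewrite (En_npos (S n)) by lra. apply is_derive_Reals. intros eps He.
  destruct (poly_exp_lim (0 :: Pn n) eps He) as [M [HM HL]].
  exists (mkposreal (/ M) (Rinv_0_lt_compat _ HM)). intros h Hh0 Hh. simpl in Hh.
  rewrite Rplus_0_l, (En_npos n 0) by lra.
  destruct (Rlt_dec 0 h) as [Hp|Hn].
  + rewrite En_pos_eq by auto.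
    replace ((peval (Pn n) (/ h) * exp (- / h) - 0) / h - 0) with (peval (0 :: Pn n) (/ h) * exp (- / h)) by (simpl; field; lra).
    apply HL. rewrite Rabs_pos_eq in Hh by lra.
    apply Rmult_lt_reg_r with h; [lra|]. rewrite Rinv_l by lra.
    apply Rmult_lt_reg_l with (/ M). apply Rinv_0_lt_compat; lra.
    rewrite <- Rmult_assoc, Rinv_l, Rmult_1_l, Rmult_1_r by lra. exact Hh.
  + rewrite En_npos by lra. replace ((0 - 0) / h - 0) with 0 by (field; auto). rewrite Rabs_R0. lra.
- rewrite (En_pos_eq (S n)) by lra.
  apply (is_derive_ext_loc (fun t => peval (Pn n) (/ t) * exp (- / t))).
  + exists (mkposreal s Hs). intros t Ht. assert (Rabs (t - s) < s) by exact Ht.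
    apply Rabs_def2 in H. rewrite En_pos_eq by lra. reflexivity.
  + assert (Di : is_derive (fun t => / t) s (- 1 / s ^ 2)).
    { apply (is_derive_inv (fun t => t) s 1). apply isd_id. lra. }
    eapply isd_ext_val.
    apply (isd_mult (fun t => peval (Pn n) (/ t)) (fun t => exp (- / t))).
    apply (isd_comp (peval (Pn n)) (fun t => / t)). apply pder_ok. exact Di.
    apply (isd_comp exp (fun t => - / t)). apply is_derive_exp.
    apply (is_derive_opp (fun t => / t)). exact Di.
    simpl Pn. rewrite peval_pnext. unfold opp; simpl. field. lra.
Qed.

Lemma smooth3_En k : smooth3 (fun x _ _ => En k x).
Proof. intro n. apply Cn3_tower. intros. apply En_deriv. Qed.

Lemma En0_pos s : 0 < s -> 0 < En 0 s.
Proof. intros Hs. rewrite En_pos_eq by auto. simpl. rewrite Rmult_0_r, Rplus_0_r, Rmult_1_l. apply exp_pos. Qed.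


Lemma s1d (phi : R -> R) (a : fun3) : smooth3 (fun x _ _ => phi x) -> smooth3 a -> smooth3 (fun x y e => phi (a x y e)).
Proof. intros H1 H2. exact (smooth3_comp (fun x _ _ => phi x) a a a H1 H2 H2 H2). Qed.

Lemma En_nonneg (k : nat) (s : R) : 0 <= En 0 s.
Proof. destruct (Rlt_dec 0 s). apply Rlt_le, En0_pos; auto. rewrite En_npos by lra. lra. Qed.

Definition Sf (x : R) : R := En 0 x * / (En 0 x + En 0 (1 - x)).

Lemma Sf_den x : 0 < En 0 x + En 0 (1 - x).
Proof.
destruct (Rlt_dec 0 x).
- pose proof (En0_pos x r). pose proof (En_nonneg 0 (1-x)). lra.
- pose proof (En0_pos (1 - x) ltac:(lra)). pose proof (En_nonneg 0 x). lra.
Qed.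

Lemma smooth3_Sf : smooth3 (fun x _ _ => Sf x).
Proof.
unfold Sf.
apply (smooth3_mult (fun x _ _ => En 0 x) (fun x _ _ => / (En 0 x + En 0 (1 - x)))).
apply smooth3_En.
apply (smooth3_inv (fun x _ _ => En 0 x + En 0 (1 - x))).
{ intros. pose proof (Sf_den x). lra. }
apply (smooth3_plus (fun x _ _ => En 0 x) (fun x _ _ => En 0 (1 - x))). apply smooth3_En.
apply (s1d (En 0) (fun x _ _ => 1 - x)). apply smooth3_En.
apply (smooth3_minus (fun _ _ _ => 1) (fun x _ _ => x)). apply smooth3_const. apply smooth3_p1.
Qed.

Lemma Sf_0 x : x <= 0 -> Sf x = 0.
Proof. intros. unfold Sf. rewrite En_npos by lra. ring. Qed.
Lemma Sf_1 x : 1 <= x -> Sf x = 1.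
Proof. intros. unfold Sf. rewrite (En_npos 0 (1 - x)) by lra. rewrite Rplus_0_r. field.
pose proof (En0_pos x ltac:(lra)). lra. Qed.
Lemma Sf_01 x : 0 <= Sf x <= 1.
Proof.
unfold Sf. pose proof (Sf_den x). pose proof (En_nonneg 0 x). pose proof (En_nonneg 0 (1-x)).
split.
- apply Rmult_le_pos; auto. apply Rlt_le, Rinv_0_lt_compat; auto.
- apply Rmult_le_reg_r with (En 0 x + En 0 (1 - x)); auto.
  rewrite Rmult_assoc, Rinv_l, Rmult_1_r, Rmult_1_l by lra. lra.
Qed.

Lemma sigma_ex rho : 0 < rho -> exists sg : R -> R, smooth3 (fun x _ _ => sg x) /\
  (forall t, Rabs t <= rho -> sg t = t) /\ (forall t, Rabs (sg t) <= 2 * rho).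
Proof.
intros Hr.
exists (fun t => t * (Sf ((t + 2 * rho) / rho) * Sf ((2 * rho - t) / rho))).
split; [|split].
- apply (smooth3_mult (fun x _ _ => x) (fun x _ _ => Sf ((x + 2 * rho) / rho) * Sf ((2 * rho - x) / rho))).
  apply smooth3_p1.
  apply (smooth3_mult (fun x _ _ => Sf ((x + 2 * rho) / rho)) (fun x _ _ => Sf ((2 * rho - x) / rho))).
  + apply (s1d Sf (fun x _ _ => (x + 2 * rho) / rho)). apply smooth3_Sf.
    apply (smooth3_mult (fun x _ _ => x + 2 * rho) (fun _ _ _ => / rho)); [|apply smooth3_const].
    apply (smooth3_plus (fun x _ _ => x) (fun _ _ _ => 2 * rho)); [apply smooth3_p1|apply smooth3_const].
  + apply (s1d Sf (fun x _ _ => (2 * rho - x) / rho)). apply smooth3_Sf.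
    apply (smooth3_mult (fun x _ _ => 2 * rho - x) (fun _ _ _ => / rho)); [|apply smooth3_const].
    apply (smooth3_minus (fun _ _ _ => 2 * rho) (fun x _ _ => x)); [apply smooth3_const|apply smooth3_p1].
- intros t Ht. apply Rabs_le_between in Ht.
  rewrite !Sf_1. ring.
  apply Rmult_le_reg_r with rho; auto. unfold Rdiv. rewrite Rmult_assoc, Rinv_l by lra. lra.
  apply Rmult_le_reg_r with rho; auto. unfold Rdiv. rewrite Rmult_assoc, Rinv_l by lra. lra.
- intros t.
  destruct (Rle_dec (Rabs t) (2 * rho)) as [Hle|Hgt].
  + rewrite Rabs_mult. pose proof (Sf_01 ((t + 2 * rho) / rho)). pose proof (Sf_01 ((2 * rho - t) / rho)).
    set (q := Sf ((t + 2 * rho) / rho) * Sf ((2 * rho - t) / rho)). assert (0 <= q <= 1) by (unfold q; nra). rewrite (Rabs_pos_eq q) by lra. pose proof (Rabs_pos t). nra.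
  + apply Rnot_le_lt in Hgt. destruct (Rle_dec 0 t).
    * rewrite Rabs_pos_eq in Hgt by lra. rewrite (Sf_0 ((2 * rho - t) / rho)).
      rewrite !Rmult_0_r, Rabs_R0. lra.
      unfold Rdiv. apply Rmult_le_reg_r with rho; auto. rewrite Rmult_assoc, Rinv_l by lra. lra.
    * rewrite Rabs_left in Hgt by lra. rewrite (Sf_0 ((t + 2 * rho) / rho)).
      rewrite Rmult_0_l, Rmult_0_r, Rabs_R0. lra.
      unfold Rdiv. apply Rmult_le_reg_r with rho; auto. rewrite Rmult_assoc, Rinv_l by lra. lra.
Qed.

Lemma rs_ex c : 0 < c -> exists Rs : R -> R, smooth3 (fun x _ _ => Rs x) /\ (forall z, z <= -c -> Rs z = / z).
Proof.
intros Hc.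
set (S1 := fun z => Sf ((- (c/2) - z) / (c/2))).
assert (Hden : forall z, z * S1 z + (- (c/2)) * (1 - S1 z) <= - (c/2)).
{ intros z. pose proof (Sf_01 ((- (c/2) - z) / (c/2))). unfold S1.
  destruct (Rle_dec z (- (c/2))).
  - nra.
  - rewrite Sf_0. lra. unfold Rdiv. apply Rmult_le_reg_r with (c/2). lra.
    rewrite Rmult_assoc, Rinv_l, Rmult_0_l by lra. lra. }
exists (fun z => / (z * S1 z + (- (c/2)) * (1 - S1 z))). split.
- apply (smooth3_inv (fun x _ _ => x * S1 x + (- (c/2)) * (1 - S1 x))).
  { intros x _ _. specialize (Hden x). lra. }
  assert (HS1 : smooth3 (fun x _ _ => S1 x)).
  { unfold S1. apply (s1d Sf (fun x _ _ => (- (c/2) - x) / (c/2))). apply smooth3_Sf.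
    apply (smooth3_mult (fun x _ _ => - (c/2) - x) (fun _ _ _ => / (c/2))); [|apply smooth3_const].
    apply (smooth3_minus (fun _ _ _ => - (c/2)) (fun x _ _ => x)); [apply smooth3_const|apply smooth3_p1]. }
  apply (smooth3_plus (fun x _ _ => x * S1 x) (fun x _ _ => - (c/2) * (1 - S1 x))).
  apply (smooth3_mult (fun x _ _ => x) (fun x _ _ => S1 x)); auto using smooth3_p1.
  apply (smooth3_mult (fun _ _ _ => - (c/2)) (fun x _ _ => 1 - S1 x)); [apply smooth3_const|].
  apply (smooth3_minus (fun _ _ _ => 1) (fun x _ _ => S1 x)); auto using smooth3_const.
- intros z Hz. unfold S1. rewrite Sf_1. f_equal. ring.
  unfold Rdiv. apply Rmult_le_reg_r with (c/2). lra. rewrite Rmult_assoc, Rinv_l, Rmult_1_l, Rmult_1_r by lra. lra.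
Qed.


Lemma mvt2 (g : R -> R) a a1 : (forall t, ex_derive g t) ->
  exists xi, Rmin a a1 <= xi <= Rmax a a1 /\ g a1 - g a = Derive g xi * (a1 - a).
Proof.
intros Hg.
destruct (MVT_gen g a a1 (Derive g)) as [c [Hc E]].
- intros x _. apply Derive_correct, Hg.
- intros x _. apply continuity_pt_filterlim. exact (ex_derive_continuous _ _ (Hg x)).
- exists c. auto.
Qed.

Section IFT.
Variable H : fun3.
Variables r c : R.
Hypothesis HP : has_partials3 H.
Hypothesis HC : cont3 H.
Hypothesis Hr : 0 < r.
Hypothesis Hc : 0 < c.
Hypothesis Hneg : forall x y e, -r <= x <= r -> D1 H x y e <= -c.
Hypothesis Hsgn : forall y e, 0 < H (-r) y e /\ H r y e < 0.

Lemma ift_decr y e x1 x2 : -r <= x1 -> x1 < x2 -> x2 <= r -> H x2 y e < H x1 y e.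
Proof.
intros H1 H2 H3.
destruct (mvt2 (fun t => H t y e) x1 x2) as [xi [Hxi E]]. { intro t. exact (proj1 (HP t y e)). }
change (Derive (fun t => H t y e) xi) with (D1 H xi y e) in E.
rewrite Rmin_left, Rmax_right in Hxi by lra.
pose proof (Hneg xi y e ltac:(lra)). nra.
Qed.

Lemma ift_uniq y e x1 x2 : -r <= x1 <= r -> -r <= x2 <= r -> H x1 y e = H x2 y e -> x1 = x2.
Proof.
intros H1 H2 E. destruct (Rtotal_order x1 x2) as [L|[L|L]]; auto.
- pose proof (ift_decr y e x1 x2 ltac:(lra) L ltac:(lra)). lra.
- pose proof (ift_decr y e x2 x1 ltac:(lra) L ltac:(lra)). lra.
Qed.

Lemma ift_exists y e : exists x, -r < x < r /\ H x y e = 0.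
Proof.
assert (Hcont : continuity (fun x => - H x y e)).
{ intro x. apply continuity_pt_opp. apply (cont3_r1 H y e x HC). }
destruct (IVT (fun x => - H x y e) (-r) r Hcont ltac:(lra)) as [z [Hz E]].
{ pose proof (Hsgn y e); lra. } { pose proof (Hsgn y e); lra. }
exists z. pose proof (Hsgn y e). split; [|lra].
destruct Hz as [Hz1 Hz2]. split.
- destruct (Req_dec z (-r)) as [->|]; [lra|lra].
- destruct (Req_dec z r) as [->|]; [lra|lra].
Qed.

Definition ift_p (y e : R) : R := proj1_sig (constructive_indefinite_description _ (ift_exists y e)).

Lemma ift_p_spec y e : -r < ift_p y e < r /\ H (ift_p y e) y e = 0.
Proof. unfold ift_p. destruct (constructive_indefinite_description _ _) as [x Hx]. simpl. exact Hx. Qed.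

Lemma ift_cont : cont3 (fun _ y e => ift_p y e).
Proof.
intros x y0 e0 eps He.
set (q0 := ift_p y0 e0). destruct (ift_p_spec y0 e0) as [Hq0 E0]. fold q0 in Hq0, E0.
assert (Hab : Rabs q0 < r) by (apply Rabs_def1; lra).
set (eta := Rmin (eps/2) ((r - Rabs q0)/2)).
assert (Heta : 0 < eta) by (apply Rmin_pos; lra).
assert (Heta1 : eta <= eps/2) by apply Rmin_l.
assert (Heta2 : eta <= (r - Rabs q0)/2) by apply Rmin_r.
assert (Hq0' : - Rabs q0 <= q0 <= Rabs q0) by (split; [pose proof (Rabs_pos q0); pose proof (Rle_abs (-q0)); rewrite Rabs_Ropp in *; lra| apply Rle_abs]).
assert (P1 : 0 < H (q0 - eta) y0 e0).
{ rewrite <- E0. apply ift_decr; lra. }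
assert (P2 : H (q0 + eta) y0 e0 < 0).
{ rewrite <- E0. apply ift_decr; lra. }
destruct (HC (q0 - eta) y0 e0 _ P1) as [d1 [Hd1 K1]].
destruct (HC (q0 + eta) y0 e0 (- H (q0 + eta) y0 e0) ltac:(lra)) as [d2 [Hd2 K2]].
exists (Rmin d1 d2). split; [apply Rmin_pos; auto|].
intros x' y' e' _ Hy He'.
pose proof (Rmin_l d1 d2). pose proof (Rmin_r d1 d2).
assert (A1 : 0 < H (q0 - eta) y' e').
{ assert (Rabs (H (q0 - eta) y' e' - H (q0 - eta) y0 e0) < H (q0 - eta) y0 e0) by (apply K1; try lra; rewrite Rminus_eq_0, Rabs_R0; lra).
  apply Rabs_def2 in H2. lra. }
assert (A2 : H (q0 + eta) y' e' < 0).
{ assert (Rabs (H (q0 + eta) y' e' - H (q0 + eta) y0 e0) < - H (q0 + eta) y0 e0) by (apply K2; try lra; rewrite Rminus_eq_0, Rabs_R0; lra).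
  apply Rabs_def2 in H2. lra. }
destruct (ift_p_spec y' e') as [Hq E]. set (q := ift_p y' e') in *.
assert (L1 : q0 - eta < q).
{ destruct (Rlt_le_dec (q0 - eta) q) as [|L]; auto. exfalso.
  destruct (Req_dec q (q0 - eta)) as [Eq|Nq]. rewrite Eq in E. lra.
  pose proof (ift_decr y' e' q (q0 - eta) ltac:(lra) ltac:(lra) ltac:(lra)). lra. }
assert (L2 : q < q0 + eta).
{ destruct (Rlt_le_dec q (q0 + eta)) as [|L]; auto. exfalso.
  destruct (Req_dec q (q0 + eta)) as [Eq|Nq]. rewrite Eq in E. lra.
  pose proof (ift_decr y' e' (q0 + eta) q ltac:(lra) ltac:(lra) ltac:(lra)). lra. }
apply Rabs_def1; lra.
Qed.

End IFT.


Lemma minmax_abs a b x : Rmin a b <= x <= Rmax a b -> Rabs (x - a) <= Rabs (b - a).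
Proof. unfold Rmin, Rmax. intros. destruct (Rle_dec a b); unfold Rabs; repeat destruct Rcase_abs; lra. Qed.

Lemma ift_deriv (H : fun3) r c (Rs : R -> R) (q : R -> R -> R) :
  has_partials3 H -> cont3 (D1 H) -> cont3 (D2 H) -> 0 < c ->
  (forall x y e, -r <= x <= r -> D1 H x y e <= -c) ->
  (forall z, z <= -c -> Rs z * z = 1) -> cont3 (fun x _ _ => Rs x) ->
  (forall y e, -r < q y e < r /\ H (q y e) y e = 0) -> cont3 (fun _ y e => q y e) ->
  forall y e, is_derive (fun s => q s e) y (- D2 H (q y e) y e * Rs (D1 H (q y e) y e)).
Proof.
intros HP C1 C2 Hc Hneg HRs CRs Hq Cq y e.
apply is_derive_Reals. intros eps He.
set (q0 := q y e).
set (Phi := fun a b c' => (fun _ _ _ => -1) a b c' * D2 H ((fun _ _ _ => q0) a b c') b ((fun _ _ _ => e) a b c')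
      * (fun x _ _ => Rs x) (D1 H a c' e) (D1 H a c' e) (D1 H a c' e)).
assert (CPhi : cont3 Phi).
{ unfold Phi. apply (cont3_mult (fun a b c' => (fun _ _ _ => -1) a b c' * D2 H ((fun _ _ _ => q0) a b c') b ((fun _ _ _ => e) a b c'))
     (fun a b c' => (fun x _ _ => Rs x) (D1 H a c' e) (D1 H a c' e) (D1 H a c' e))).
  - apply cont3_mult. apply cont3_const. apply (cont3_comp (D2 H) (fun _ _ _ => q0) (fun _ b _ => b) (fun _ _ _ => e)); auto using cont3_const, cont3_p2.
  - assert (Cu : cont3 (fun a b c' => D1 H a c' e)).
    { apply (cont3_comp (D1 H) (fun a _ _ => a) (fun _ _ c' => c') (fun _ _ _ => e)); auto using cont3_const, cont3_p1, cont3_p3. }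
    apply (cont3_comp (fun x _ _ => Rs x) (fun a b c' => D1 H a c' e) (fun a b c' => D1 H a c' e) (fun a b c' => D1 H a c' e)); auto. }
destruct (CPhi q0 y y eps He) as [dP [HdP KP]].
destruct (Cq 0 y e dP HdP) as [dq [Hdq Kq]].
exists (mkposreal (Rmin dP dq) (Rmin_pos _ _ HdP Hdq)). intros k Hk0 Hk. simpl in Hk.
pose proof (Rmin_l dP dq). pose proof (Rmin_r dP dq).
set (q1 := q (y + k) e).
assert (Hq1 : Rabs (q1 - q0) < dP).
{ apply (Kq 0 (y+k) e); try (rewrite Rminus_eq_0, Rabs_R0; lra). replace (y + k - y) with k by ring. lra. }
destruct (Hq y e) as [R0 E0]. destruct (Hq (y+k) e) as [R1 E1]. fold q0 in R0, E0. fold q1 in R1, E1.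
destruct (mvt2 (fun t => H t (y+k) e) q0 q1) as [xi [Hxi Exi]]. { intro t. exact (proj1 (HP t (y+k) e)). }
destruct (mvt2 (fun t => H q0 t e) y (y+k)) as [ze [Hze Eze]]. { intro t. exact (proj1 (proj2 (HP q0 t e))). }
change (Derive (fun t => H t (y+k) e) xi) with (D1 H xi (y+k) e) in Exi.
change (Derive (fun t => H q0 t e) ze) with (D2 H q0 ze e) in Eze.
assert (Hxr : -r <= xi <= r).
{ unfold Rmin, Rmax in Hxi. destruct (Rle_dec q0 q1); lra. }
assert (Hr1 : Rs (D1 H xi (y+k) e) * D1 H xi (y+k) e = 1) by (apply HRs, Hneg; auto).
assert (Eq : (q1 - q0) / k = Phi xi ze (y + k)).
{ fold q0 q1. unfold Phi. simpl.
  assert (Z : D1 H xi (y+k) e * (q1 - q0) + D2 H q0 ze e * (y + k - y) = 0).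
  { rewrite <- Exi, <- Eze. lra. }
  replace (q1 - q0) with (Rs (D1 H xi (y+k) e) * D1 H xi (y+k) e * (q1 - q0)) by (rewrite Hr1; ring).
  apply Rmult_eq_reg_r with k; auto. field_simplify; auto.
  replace (y + k - y) with k in Z by ring.
  transitivity (Rs (D1 H xi (y+k) e) * (D1 H xi (y+k) e * (q1 - q0))). ring.
  replace (D1 H xi (y+k) e * (q1 - q0)) with (- (D2 H q0 ze e * k)) by lra. ring. }
rewrite Eq.
assert (T : Phi q0 y y = - D2 H q0 y e * Rs (D1 H q0 y e)) by (unfold Phi; ring).
rewrite <- T. apply KP.
- eapply Rle_lt_trans; [apply (minmax_abs q0 q1 xi Hxi)|]. exact Hq1.
- eapply Rle_lt_trans; [apply (minmax_abs y (y+k) ze Hze)|]. replace (y + k - y) with k by ring. lra.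
- replace (y + k - y) with k by ring. lra.
Qed.


Lemma cont3_of_smooth f : smooth3 f -> cont3 f.
Proof. intros H. apply cont3_iff, smooth3_cont, H. Qed.

Theorem ift_smooth (H : fun3) r c (Rs : R -> R) :
  smooth3 H -> 0 < r -> 0 < c ->
  (forall x y e, -r <= x <= r -> D1 H x y e <= -c) ->
  (forall y e, 0 < H (-r) y e /\ H r y e < 0) ->
  smooth3 (fun x _ _ => Rs x) -> (forall z, z <= -c -> Rs z * z = 1) ->
  exists p : R -> R -> R, smooth3 (fun _ y e => p y e) /\ forall y e, -r < p y e < r /\ H (p y e) y e = 0.
Proof.
intros HS Hr Hc Hneg Hsgn SRs HRs.
assert (HP := smooth3_partials H HS).
assert (HC := cont3_of_smooth H HS).
set (p := ift_p H r HC Hr Hsgn).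
assert (Hp : forall y e, -r < p y e < r /\ H (p y e) y e = 0) by (intros; apply ift_p_spec).
assert (Cp : cont3 (fun _ y e => p y e)) by (apply (ift_cont H r c HP HC Hr Hc Hneg Hsgn)).
exists p. split; [|exact Hp].
assert (C1 := cont3_of_smooth _ (smooth3_D1 H HS)).
assert (C2 := cont3_of_smooth _ (smooth3_D2 H HS)).
assert (C3 := cont3_of_smooth _ (smooth3_D3 H HS)).
assert (CRs := cont3_of_smooth _ SRs).
assert (Dy : forall y e, is_derive (fun s => p s e) y (- D2 H (p y e) y e * Rs (D1 H (p y e) y e))).
{ apply (ift_deriv H r c Rs p HP C1 C2 Hc Hneg HRs CRs Hp Cp). }
assert (De : forall y e, is_derive (fun s => p y s) e (- D3 H (p y e) y e * Rs (D1 H (p y e) y e))).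
{ intros y e.
  apply (ift_deriv (fun x a b => H x b a) r c Rs (fun a b => p b a)) with (y := e) (e := y).
  - intros x a b. destruct (HP x b a) as [? [? ?]]. refine (conj _ (conj _ _)); assumption.
  - apply (cont3_comp (D1 H) (fun x _ _ => x) (fun _ _ b => b) (fun _ a _ => a)); auto using cont3_p1, cont3_p2, cont3_p3.
  - apply (cont3_comp (D3 H) (fun x _ _ => x) (fun _ _ b => b) (fun _ a _ => a)); auto using cont3_p1, cont3_p2, cont3_p3.
  - exact Hc.
  - intros x a b Hx. apply Hneg; auto.
  - exact HRs.
  - exact CRs.
  - intros a b. apply Hp.
  - apply (cont3_comp (fun _ y e => p y e) (fun x _ _ => x) (fun _ _ b => b) (fun _ a _ => a)); auto using cont3_p1, cont3_p2, cont3_p3. }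
set (Phi1 := fun x y e => - D2 H x y e * Rs (D1 H x y e)).
set (Phi2 := fun x y e => - D3 H x y e * Rs (D1 H x y e)).
assert (S1 : smooth3 Phi1).
{ unfold Phi1. apply (smooth3_mult (fun x y e => - D2 H x y e) (fun x y e => Rs (D1 H x y e))).
  apply smooth3_opp, smooth3_D2, HS. apply (s1d Rs (D1 H)); auto. apply smooth3_D1, HS. }
assert (S2 : smooth3 Phi2).
{ unfold Phi2. apply (smooth3_mult (fun x y e => - D3 H x y e) (fun x y e => Rs (D1 H x y e))).
  apply smooth3_opp, smooth3_D3, HS. apply (s1d Rs (D1 H)); auto. apply smooth3_D1, HS. }
assert (E1 : D1 (fun _ y e => p y e) = fun _ _ _ => 0).
{ fext. unfold D1. apply Derive_const. }
assert (E2 : D2 (fun _ y e => p y e) = Comp Phi1 (fun _ y e => p y e) (fun _ y _ => y) (fun _ _ e => e)).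
{ fext. unfold D2, Comp, Phi1. apply Derive_eq, Dy. }
assert (E3 : D3 (fun _ y e => p y e) = Comp Phi2 (fun _ y e => p y e) (fun _ y _ => y) (fun _ _ e => e)).
{ fext. unfold D3, Comp, Phi2. apply Derive_eq, De. }
intro n. induction n.
{ apply cont3_iff, Cp. }
split. { apply cont3_iff, Cp. }
split. { intros x y e. refine (conj _ (conj _ _)). apply exd_const. eexists; apply Dy. eexists; apply De. }
rewrite E1, E2, E3. refine (conj _ (conj _ _)).
- apply Cn3_const.
- apply Cn3_comp; [exact S1|exact IHn|apply Cn3_p2|apply Cn3_p3].
- apply Cn3_comp; [exact S2|exact IHn|apply Cn3_p2|apply Cn3_p3].
Qed.


Lemma tube (Df : fun3) a b : a <= b -> cont3 Df -> (forall x, a <= x <= b -> Df x 0 0 < 0) ->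
  exists c' d, 0 < c' /\ 0 < d /\ forall x y e, a - d <= x <= b + d -> Rabs y < d -> Rabs e < d -> Df x y e <= - c'.
Proof.
intros Hab HC Hneg.
destruct (continuity_ab_maj (fun x => Df x 0 0) a b Hab) as [Mx [HM HMx]].
{ intros x _. apply cont3_r1, HC. }
set (m := Df Mx 0 0). assert (Hm : m < 0) by (apply Hneg; auto).
set (c' := - m / 2). assert (Hc' : 0 < c') by (unfold c'; lra).
assert (Hd : forall t0, {d : posreal | forall x y e, Rabs (x - t0) < d -> Rabs (y - 0) < d -> Rabs (e - 0) < d ->
   Rabs (Df x y e - Df t0 0 0) < c'}).
{ intro t0. apply constructive_indefinite_description.
  destruct (HC t0 0 0 c' Hc') as [d [Hd H]]. exists (mkposreal d Hd). exact H. }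
set (del := fun t0 => mkposreal (proj1_sig (Hd t0) / 2) (Rdiv_lt_0_compat _ _ (cond_pos _) Rlt_0_2)).
destruct (compactness_value_1d a b del) as [d0 Hd0].
exists c', (d0 / 2). split; [auto|]. split; [pose proof (cond_pos d0); lra|].
intros x y e Hx Hy He.
set (xt := Rmax a (Rmin x b)).
assert (Hxt : a <= xt <= b) by (unfold xt, Rmax, Rmin; repeat destruct Rle_dec; lra).
assert (Hxx : Rabs (x - xt) <= d0 / 2).
{ apply Rabs_le. unfold xt. destruct (Rle_lt_dec x b).
  - rewrite Rmin_left by lra. destruct (Rle_lt_dec a x).
    + rewrite Rmax_right by lra. pose proof (cond_pos d0). lra.
    + rewrite Rmax_left by lra. lra.
  - rewrite Rmin_right by lra. rewrite Rmax_right by lra. lra. }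
specialize (Hd0 xt Hxt). apply NNPP. intro Hn. apply Hd0. intros [t [Ht [Htt Hdl]]]. apply Hn.
destruct (Hd t) as [D HD] eqn:EHD.
unfold del in Htt, Hdl. simpl in Htt, Hdl. rewrite EHD in Htt, Hdl. simpl in Htt, Hdl.
pose proof (cond_pos D).
assert (HMt : Df t 0 0 <= m) by (apply HM; auto).
assert (A : Rabs (Df x y e - Df t 0 0) < c').
{ apply HD.
  - replace (x - t) with ((x - xt) + (xt - t)) by ring. eapply Rle_lt_trans; [apply Rabs_triang|]. lra.
  - rewrite Rminus_0_r. lra.
  - rewrite Rminus_0_r. lra. }
apply Rabs_def2 in A. unfold c' in *. lra.
Qed.


Lemma h_zero (h : fun3) a b : a < 0 -> 0 < b -> cont3 h ->
  (forall x, a <= x <= b -> x <> 0 -> x * h x 0 0 < 0) -> h 0 0 0 = 0.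
Proof.
intros Ha Hb Ch Hs.
destruct (Rtotal_order (h 0 0 0) 0) as [L|[E|L]]; auto; exfalso.
- destruct (Ch 0 0 0 (- h 0 0 0) ltac:(lra)) as [d [Hd K]].
  set (x := Rmax (- d / 2) a).
  assert (Hx1 : x < 0) by (unfold x; apply Rmax_lub_lt; lra).
  assert (Hx2 : a <= x) by apply Rmax_r.
  assert (Hx3 : - d / 2 <= x) by apply Rmax_l.
  assert (A : Rabs (h x 0 0 - h 0 0 0) < - h 0 0 0) by (apply K; rewrite ?Rminus_0_r, ?Rabs_R0; try lra; rewrite Rabs_left; lra).
  apply Rabs_def2 in A. pose proof (Hs x ltac:(lra) ltac:(lra)). nra.
- destruct (Ch 0 0 0 (h 0 0 0) ltac:(lra)) as [d [Hd K]].
  set (x := Rmin (d / 2) b).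
  assert (Hx1 : 0 < x) by (unfold x; apply Rmin_glb_lt; lra).
  assert (Hx2 : x <= b) by apply Rmin_r.
  assert (Hx3 : x <= d / 2) by apply Rmin_l.
  assert (A : Rabs (h x 0 0 - h 0 0 0) < h 0 0 0) by (apply K; rewrite ?Rminus_0_r, ?Rabs_R0; try lra; rewrite Rabs_pos_eq; lra).
  apply Rabs_def2 in A. pose proof (Hs x ltac:(lra) ltac:(lra)). nra.
Qed.

Lemma had3 (h : fun3) x y e q : smooth3 h ->
  RInt (fun t => t ^ 0 * D1 h (q + t * (x - q)) y e) 0 1 * (x - q) = h x y e - h q y e.
Proof.
intros Sh.
rewrite (RInt_ext _ (fun t => D1 h (q + t * (x - q)) y e)) by (intros; simpl; ring).
rewrite (hadamard1 (fun z => h z y e) (fun z => D1 h z y e) q (x - q)).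
- replace (q + (x - q)) with x by ring. reflexivity.
- intro z. apply Derive_correct. exact (proj1 (smooth3_partials h Sh z y e)).
- intro z. apply cont3_r1. apply cont3_of_smooth, smooth3_D1, Sh.
Qed.

Lemma had2 (A : fun3) X y e : smooth3 A ->
  RInt (fun t => t ^ 0 * D2 A X (0 + t * y) e) 0 1 * y = A X y e - A X 0 e.
Proof.
intros Sh.
rewrite (RInt_ext _ (fun t => D2 A X (0 + t * y) e)) by (intros; simpl; ring).
rewrite (hadamard1 (fun z => A X z e) (fun z => D2 A X z e) 0 y).
- replace (0 + y) with y by ring. reflexivity.
- intro z. apply Derive_correct. exact (proj1 (proj2 (smooth3_partials A Sh X z e))).
- intro z. apply cont3_r2. apply cont3_of_smooth, smooth3_D2, Sh.
Qed.


Theorem lemma2p1 (a b : R) (f h : R -> R -> R -> R) :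
  a < 0 -> 0 < b ->
  smooth3 f -> smooth3 h ->
  (forall x, a <= x <= b -> x <> 0 -> x * h x 0 0 < 0) ->
  D1 h 0 0 0 < 0 ->
  exists eps0 : R, 0 < eps0 /\
  exists (U : R -> R -> Prop),
    open2 U /\ (forall x, a <= x <= b -> U x 0) /\
  exists (phi1 phi2 K g0 : R -> R -> R -> R) (f0 : R -> R -> R),
    smooth3 phi1 /\ smooth3 phi2 /\ smooth3 K /\
    smooth3 (fun x _ e => f0 x e) /\ smooth3 g0 /\
    g0 0 0 0 = 0 /\
    forall e, 0 <= e < eps0 ->
      (forall x y, U x y -> 0 < K x y e) /\
      (forall x y x' y', U x y -> U x' y' ->
         phi1 x y e = phi1 x' y' e -> phi2 x y e = phi2 x' y' e ->
         x = x' /\ y = y') /\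
      (forall x y, U x y ->
         D1 phi1 x y e * D2 phi2 x y e - D2 phi1 x y e * D1 phi2 x y e <> 0) /\
      (forall x y, U x y ->
         let X := phi1 x y e in
         let Y := phi2 x y e in
         D1 phi1 x y e * (K x y e * (e * f x y e))
           + D2 phi1 x y e * (K x y e * (y * h x y e))
           = e * f0 X e + Y * g0 X Y e /\
         D1 phi2 x y e * (K x y e * (e * f x y e))
           + D2 phi2 x y e * (K x y e * (y * h x y e))
           = - X * Y).
Proof.
intros Ha Hb Sf Sh Hsign Hhx.
assert (Ch := cont3_of_smooth h Sh).
assert (h00 : h 0 0 0 = 0) by (apply (h_zero h a b); auto).
set (c := - D1 h 0 0 0 / 2). assert (Hc : 0 < c) by (unfold c; lra).
destruct (cont3_of_smooth _ (smooth3_D1 h Sh) 0 0 0 c Hc) as [d1 [Hd1 K1]].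
assert (K1' : forall x y e, Rabs x < d1 -> Rabs y < d1 -> Rabs e < d1 -> D1 h x y e <= - c).
{ intros x y e H1 H2 H3. assert (A : Rabs (D1 h x y e - D1 h 0 0 0) < c) by (apply K1; rewrite Rminus_0_r; auto).
  apply Rabs_def2 in A. unfold c in *. lra. }
set (r := Rmin (d1 / 2) (Rmin (- a / 2) (b / 2))).
assert (Hr : 0 < r) by (unfold r; repeat apply Rmin_pos; lra).
assert (Hr1 : r <= d1 / 2) by apply Rmin_l.
assert (Hr2 : r <= - a / 2) by (eapply Rle_trans; [apply Rmin_r|apply Rmin_l]).
assert (Hr3 : r <= b / 2) by (eapply Rle_trans; [apply Rmin_r|apply Rmin_r]).
assert (hr : h r 0 0 < 0). { pose proof (Hsign r ltac:(split; lra) ltac:(lra)). nra. }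
assert (hmr : 0 < h (-r) 0 0). { pose proof (Hsign (-r) ltac:(split; lra) ltac:(lra)). nra. }
destruct (Ch r 0 0 (- h r 0 0) ltac:(lra)) as [dr [Hdr Kr]].
destruct (Ch (-r) 0 0 (h (-r) 0 0) ltac:(lra)) as [dl [Hdl Kl]].
set (rho := Rmin d1 (Rmin dr dl) / 4).
assert (Hrho : 0 < rho) by (unfold rho; assert (0 < Rmin d1 (Rmin dr dl)) by (repeat apply Rmin_pos; lra); lra).
assert (Hrho1 : 4 * rho <= d1) by (unfold rho; pose proof (Rmin_l d1 (Rmin dr dl)); lra).
assert (Hrho2 : 4 * rho <= dr) by (unfold rho; pose proof (Rmin_r d1 (Rmin dr dl)); pose proof (Rmin_l dr dl); lra).
assert (Hrho3 : 4 * rho <= dl) by (unfold rho; pose proof (Rmin_r d1 (Rmin dr dl)); pose proof (Rmin_r dr dl); lra).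
destruct (sigma_ex rho Hrho) as [sg [Ssg [Hsg1 Hsg2]]].
set (HH := fun x y e => h x (sg y) (sg e)).
assert (SHH : smooth3 HH).
{ unfold HH. apply (smooth3_comp h (fun x _ _ => x) (fun _ y _ => sg y) (fun _ _ e => sg e)); auto using smooth3_p1.
  apply (s1d sg (fun _ y _ => y)); auto using smooth3_p2. apply (s1d sg (fun _ _ e => e)); auto using smooth3_p3. }
assert (Hneg : forall x y e, -r <= x <= r -> D1 HH x y e <= -c).
{ intros x y e Hx. change (D1 HH x y e) with (D1 h x (sg y) (sg e)). apply K1'.
  apply Rabs_def1; lra. pose proof (Hsg2 y); lra. pose proof (Hsg2 e); lra. }
assert (Hsgn : forall y e, 0 < HH (-r) y e /\ HH r y e < 0).
{ intros y e. unfold HH. pose proof (Hsg2 y). pose proof (Hsg2 e). split.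
  - assert (A : Rabs (h (-r) (sg y) (sg e) - h (-r) 0 0) < h (-r) 0 0) by (apply Kl; rewrite ?Rminus_0_r, ?Rminus_eq_0, ?Rabs_R0; lra).
    apply Rabs_def2 in A. lra.
  - assert (A : Rabs (h r (sg y) (sg e) - h r 0 0) < - h r 0 0) by (apply Kr; rewrite ?Rminus_0_r, ?Rminus_eq_0, ?Rabs_R0; lra).
    apply Rabs_def2 in A. lra. }
destruct (rs_ex c Hc) as [Rs1 [SRs1 HRs1]].
destruct (ift_smooth HH r c Rs1 SHH Hr Hc Hneg Hsgn SRs1) as [p [Sp Hp]].
{ intros z Hz. rewrite HRs1 by auto. apply Rinv_l. lra. }
assert (hp0 : forall y e, Rabs y <= rho -> Rabs e <= rho -> h (p y e) y e = 0).
{ intros y e Hy He. destruct (Hp y e) as [_ E]. unfold HH in E. rewrite (Hsg1 y Hy), (Hsg1 e He) in E. exact E. }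
assert (p00 : p 0 0 = 0).
{ destruct (Hp 0 0) as [R0 E0].
  apply (ift_uniq HH r c (smooth3_partials _ SHH) Hc Hneg 0 0); try lra.
  rewrite E0. unfold HH. rewrite !Hsg1 by (rewrite Rabs_R0; lra). auto. }
set (P := fun (_ y e : R) => p y e).
set (Df := Mk 0 (D1 h) P (fun x y e => x - p y e) (fun _ y _ => y) (fun _ _ e => e)).
assert (SDf : smooth3 Df).
{ unfold Df. apply smooth3_Mk; auto using smooth3_D1, smooth3_p2, smooth3_p3.
  apply (smooth3_minus (fun x _ _ => x) P); auto using smooth3_p1. }
assert (Had : forall x y e, Df x y e * (x - p y e) = h x y e - h (p y e) y e).
{ intros x y e. unfold Df, Mk, P. apply had3; auto. }
assert (Dneg : forall x, a <= x <= b -> Df x 0 0 < 0).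
{ intros x Hx. destruct (Req_dec x 0) as [->|Hx0].
  - unfold Df, Mk, P. rewrite p00.
    rewrite (RInt_ext _ (fun _ => D1 h 0 0 0)) by (intros t _; cbv beta; replace (0 + t * (0 - 0)) with 0 by ring; simpl; apply Rmult_1_l).
    rewrite RInt_const. unfold scal; simpl; unfold mult; simpl. lra.
  - pose proof (Had x 0 0) as E. rewrite p00, h00, Rminus_0_r, Rminus_0_r in E.
    pose proof (Hsign x Hx Hx0). rewrite <- E in H.
    assert (0 < x * x) by (apply Rsqr_pos_lt; auto). nra. }
destruct (tube Df a b ltac:(lra) (cont3_of_smooth _ SDf) Dneg) as [c' [dd [Hc' [Hdd Htube]]]].
destruct (rs_ex c' Hc') as [Rs2 [SRs2 HRs2]].
set (K := fun x y e => - Rs2 (Df x y e)).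
assert (SK : smooth3 K).
{ unfold K. apply (smooth3_opp (fun x y e => Rs2 (Df x y e))). apply (s1d Rs2 Df); auto. }
set (del := Rmin dd rho / 2).
assert (Hdel : 0 < del) by (unfold del; assert (0 < Rmin dd rho) by (apply Rmin_pos; lra); lra).
assert (Hdel1 : del <= dd / 2) by (unfold del; pose proof (Rmin_l dd rho); lra).
assert (Hdel2 : del <= rho / 2) by (unfold del; pose proof (Rmin_r dd rho); lra).
set (phi1 := fun x y e => x - p y e).
set (phi2 := fun (x y e : R) => y).
set (AA := fun x y e => K x y e * f x y e).
set (Ah := fun X Y e => AA (X + p Y e) Y e).
assert (SAh : smooth3 Ah).
{ unfold Ah. apply (smooth3_comp AA (fun X Y e => X + p Y e) (fun _ Y _ => Y) (fun _ _ e => e)); auto using smooth3_p2, smooth3_p3.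
  unfold AA. apply (smooth3_mult K f); auto.
  apply (smooth3_plus (fun X _ _ => X) P); auto using smooth3_p1. }
set (f0 := fun X e => Ah X 0 e).
set (G' := fun a0 b0 c0 => D2 Ah b0 a0 c0).
set (g0 := fun X Y e => e * Mk 0 G' (fun _ _ _ => 0) (fun _ Y _ => Y) (fun X _ _ => X) (fun _ _ e => e) X Y e + D2 P X Y e * X).
exists del. split; [exact Hdel|].
exists (fun x y => a - del < x < b + del /\ - del < y < del).
split.
{ intros x y [[Hx1 Hx2] [Hy1 Hy2]].
  exists (Rmin (Rmin (x - (a - del)) (b + del - x)) (Rmin (y + del) (del - y))).
  split. { repeat apply Rmin_pos; lra. }
  intros x' y' H1 H2.
  pose proof (Rmin_l (Rmin (x - (a - del)) (b + del - x)) (Rmin (y + del) (del - y))).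
  pose proof (Rmin_r (Rmin (x - (a - del)) (b + del - x)) (Rmin (y + del) (del - y))).
  pose proof (Rmin_l (x - (a - del)) (b + del - x)). pose proof (Rmin_r (x - (a - del)) (b + del - x)).
  pose proof (Rmin_l (y + del) (del - y)). pose proof (Rmin_r (y + del) (del - y)).
  apply Rabs_def2 in H1. apply Rabs_def2 in H2. lra. }
split. { intros x Hx. lra. }
exists phi1, phi2, K, g0, f0.
assert (HPp := smooth3_partials _ Sp).
assert (dp1 : forall x y e, D1 phi1 x y e = 1).
{ intros x y e. unfold D1, phi1. apply Derive_eq. eapply isd_ext_val.
  apply (isd_plus (fun t => t) (fun _ => - p y e) x 1 0). apply isd_id. apply isd_const. ring. }
assert (dp2 : forall x y e, D2 phi1 x y e = - D2 P x y e).
{ intros x y e. unfold D2, phi1, P. apply Derive_eq. eapply isd_ext_val.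
  apply (isd_plus (fun _ => x) (fun t => - p t e) y 0 (- Derive (fun t => p t e) y)). apply isd_const.
  apply (is_derive_opp (fun t => p t e)). apply Derive_correct. exact (proj1 (proj2 (HPp x y e))). ring. }
assert (dq1 : forall x y e, D1 phi2 x y e = 0).
{ intros x y e. unfold D1, phi2. apply Derive_const. }
assert (dq2 : forall x y e, D2 phi2 x y e = 1).
{ intros x y e. unfold D2, phi2. apply Derive_eq, isd_id. }
split. { apply (smooth3_minus (fun x _ _ => x) P); auto using smooth3_p1. }
split. { apply smooth3_p2. }
split. { exact SK. }
split. { exact (smooth3_comp Ah (fun x _ _ => x) (fun _ _ _ => 0) (fun _ _ e => e) SAh smooth3_p1 (smooth3_const 0) smooth3_p3). }
split.
{ unfold g0.
  apply (smooth3_plus (fun X Y e => e * Mk 0 G' (fun _ _ _ => 0) (fun _ Y _ => Y) (fun X _ _ => X) (fun _ _ e => e) X Y e)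
     (fun X Y e => D2 P X Y e * X)).
  - apply (smooth3_mult (fun _ _ e => e) (Mk 0 G' (fun _ _ _ => 0) (fun _ Y _ => Y) (fun X _ _ => X) (fun _ _ e => e))).
    apply smooth3_p3. apply smooth3_Mk; auto using smooth3_const, smooth3_p1, smooth3_p2, smooth3_p3.
    unfold G'. apply (smooth3_comp (D2 Ah) (fun _ b0 _ => b0) (fun a0 _ _ => a0) (fun _ _ c0 => c0)); auto using smooth3_D2, smooth3_p1, smooth3_p2, smooth3_p3.
  - apply (smooth3_mult (D2 P) (fun X _ _ => X)). apply smooth3_D2, Sp. apply smooth3_p1. }
split. { unfold g0. ring. }
intros e [He1 He2].
assert (HDf : forall x y, a - del < x < b + del /\ - del < y < del -> Df x y e <= - c').
{ intros x y [Hx Hy]. apply Htube. lra. apply Rabs_def1; lra. apply Rabs_def1; lra. }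
assert (HK : forall x y, a - del < x < b + del /\ - del < y < del -> K x y e = - / Df x y e).
{ intros x y HU. unfold K. rewrite HRs2; auto. }
refine (conj _ (conj _ (conj _ _))).
- intros x y HU. rewrite HK by auto. pose proof (HDf x y HU).
  assert (/ Df x y e < 0) by (apply Rinv_lt_0_compat; lra). lra.
- intros x y x' y' _ _ E1 E2. unfold phi1, phi2 in *. subst y'. split; [lra|reflexivity].
- intros x y _. rewrite dp1, dq2, dq1. lra.
- intros x y HU. cbv zeta.
  rewrite dp1, dp2, dq1, dq2.
  pose proof (HDf x y HU) as HD.
  assert (Hh : h x y e = Df x y e * (x - p y e)).
  { rewrite Had. rewrite hp0. ring. apply Rabs_le; lra. apply Rabs_le; lra. }
  assert (KH : K x y e * h x y e = - (x - p y e)).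
  { rewrite HK by auto. rewrite Hh. field. lra. }
  assert (HM : Mk 0 G' (fun _ _ _ => 0) (fun _ Y _ => Y) (fun X _ _ => X) (fun _ _ e => e) (x - p y e) y e * y
     = Ah (x - p y e) y e - Ah (x - p y e) 0 e).
  { exact (had2 Ah (x - p y e) y e SAh). }
  assert (AhX : Ah (x - p y e) y e = K x y e * f x y e).
  { unfold Ah, AA. replace (x - p y e + p y e) with x by ring. reflexivity. }
  change (D2 P (phi1 x y e) (phi2 x y e) e) with (D2 P x y e).
  unfold f0, g0, phi1, phi2.
  set (M := Mk 0 G' (fun _ _ _ => 0) (fun _ Y _ => Y) (fun X _ _ => X) (fun _ _ e => e) (x - p y e) y e) in *.
  set (q := D2 P x y e).
  split.
  + replace (K x y e * (y * h x y e)) with (y * (K x y e * h x y e)) by ring. rewrite KH.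
    replace (K x y e * (e * f x y e)) with (e * (K x y e * f x y e)) by ring. rewrite <- AhX.
    transitivity (e * Ah (x - p y e) 0 e + e * (M * y) + q * y * (x - p y e)).
    * rewrite HM. ring.
    * replace (D2 P (x - p y e) y e) with q by reflexivity. ring.
  + replace (K x y e * (y * h x y e)) with (y * (K x y e * h x y e)) by ring. rewrite KH. ring.
Qed.
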